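(* Let $f\colon\mathbb R\times\mathbb R\times\mathbb Z^3\to\mathbb C$, $a\in\mathbb Z^3$, $T\ge1$, let $J\subseteq[0,T]$ be an interval, and let $A,N\ge1$ with $|a|\lesssim A\ll N$. Assume that for all $|t|,|t'|\le T$ and $n\in\mathbb Z^3$: $|f(t,t',n)|\le A\langle n\rangle^{-3}$, $|f(t,t',n)-f(t,t',-n)|\le A\langle n\rangle^{-4}$, and $|\partial_{t'}f(t,t',n)|\le A\langle n\rangle^{-4}$. Then $$\sup_{\lambda\in\mathbb R}\sup_{|t|\le T}\Big|\sum_{n\in\mathbb Z^3}\chi_N(n)\int_0^t1_J(t')\sin((t-t')\langle a+n\rangle)\cos((t-t')\langle n\rangle)e^{i\lambda t'}f(t,t',n)\,dt'\Big|\lesssim T^2A^3\log(2+N)N^{-1}.$$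
   Context: $\langle n\rangle=(1+|n|^2)^{1/2}$. $N$ is dyadic and $\chi_N\colon\mathbb Z^3\to[0,1]$ is the Littlewood–Paley symbol ($\chi_1=\rho_1$, $\chi_N=\rho_N-\rho_{N/2}$ for a fixed smooth radial-type truncation $\rho_N$ to $|n|\lesssim N$), supported on $|n|\sim N$. ''$|a|\lesssim A\ll N$'' means $|a|\le CA$ for an absolute constant $C$ and $N\ge C'A$ for a sufficiently large absolute constant $C'$. Implicit constants are absolute. *)

(* Defs.v *)
From Stdlib Require Import Reals ZArith List ClassicalEpsilon.
From Coquelicot Require Import Coquelicot.
Open Scope R_scope.

Definition Z3 : Type := (Z * Z * Z)%type.

Definition Z3add (a n : Z3) : Z3 :=
  match a, n with (a1, a2, a3), (n1, n2, n3) => ((a1 + n1)%Z, (a2 + n2)%Z, (a3 + n3)%Z) end.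

Definition Z3opp (n : Z3) : Z3 :=
  match n with (n1, n2, n3) => ((- n1)%Z, (- n2)%Z, (- n3)%Z) end.

Definition Z3norm (n : Z3) : R :=
  match n with (n1, n2, n3) => sqrt (IZR n1 ^ 2 + IZR n2 ^ 2 + IZR n3 ^ 2) end.

Definition jbr (n : Z3) : R := sqrt (1 + Z3norm n ^ 2).

Definition truncation_profile (rho0 : R -> R) : Prop :=
  (forall k x, ex_derive (Derive_n rho0 k) x) /\
  (forall x, 0 <= rho0 x <= 1) /\
  (forall x, Rabs x <= 1 -> rho0 x = 1) /\
  (forall x, 2 <= Rabs x -> rho0 x = 0).

Definition rhoN (rho0 : R -> R) (N : R) (n : Z3) : R := rho0 (Z3norm n / N).

Definition chiN (rho0 : R -> R) (N : R) (n : Z3) : R :=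
  if Req_EM_T N 1 then rhoN rho0 1 n else rhoN rho0 N n - rhoN rho0 (N / 2) n.

Definition is_dyadic (N : R) : Prop := exists k : nat, N = 2 ^ k.

Definition is_interval (J : R -> Prop) : Prop :=
  forall x y z, J x -> J z -> x <= y <= z -> J y.

Definition indicator (J : R -> Prop) (x : R) : R :=
  if excluded_middle_informative (J x) then 1 else 0.

Definition cexpi (th : R) : C := (cos th, sin th).

Definition zrange (K : nat) : list Z :=
  map (fun i => (Z.of_nat i - Z.of_nat K)%Z) (seq 0 (2 * K + 1)).

Definition sumZ (K : nat) (g : Z -> C) : C :=
  fold_right Cplus 0%C (map g (zrange K)).

Definition sum_box (K : nat) (g : Z3 -> C) : C :=
  sumZ K (fun n1 => sumZ K (fun n2 => sumZ K (fun n3 => g (n1, n2, n3)))).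

Definition integrand (f : R -> R -> Z3 -> C) (a : Z3) (J : R -> Prop)
  (lam t : R) (n : Z3) (t' : R) : C :=
  Cmult (RtoC (indicator J t' * sin ((t - t') * jbr (Z3add a n))
                  * cos ((t - t') * jbr n)))
        (Cmult (cexpi (lam * t')) (f t t' n)).

(* sum_n chi_N(n) int_0^t integrand dt' , the n-sum being over a box
   containing the support of chi_N *)
Definition main_term (rho0 : R -> R) (N : R) (K : nat)
  (f : R -> R -> Z3 -> C) (a : Z3) (J : R -> Prop) (lam t : R) : C :=
  sum_box K (fun n => Cmult (RtoC (chiN rho0 N n))
     (RInt (V := C_R_CompleteNormedModule) (integrand f a J lam t n) 0 t)).

(* Main.v *)
Require Import Defs.
From Stdlib Require Import Reals ZArith List.
From Coquelicot Require Import Coquelicot.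
From Stdlib Require Import Lra Lia Psatz ClassicalEpsilon Classical.
Open Scope R_scope.

Definition rsum (l : list Z) (g : Z -> R) : R := fold_right Rplus 0 (map g l).

Lemma rsum_cons x l g : rsum (x :: l) g = g x + rsum l g.
Proof. reflexivity. Qed.
Lemma rsum_nil g : rsum nil g = 0.
Proof. reflexivity. Qed.
Lemma rsum_app l1 l2 g : rsum (l1 ++ l2) g = rsum l1 g + rsum l2 g.
Proof. unfold rsum; induction l1; simpl; [ring| rewrite IHl1; ring]. Qed.
Lemma rsum_ext l g h : (forall x, In x l -> g x = h x) -> rsum l g = rsum l h.
Proof. induction l; intros H; [reflexivity|]. rewrite !rsum_cons. rewrite H by (simpl; auto).
  rewrite IHl; auto. intros; apply H; simpl; auto. Qed.
Lemma rsum_le l g h : (forall x, In x l -> g x <= h x) -> rsum l g <= rsum l h.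
Proof. induction l; intros H; [rewrite !rsum_nil; lra|]. rewrite !rsum_cons.
  assert (g a <= h a) by (apply H; simpl; auto).
  assert (rsum l g <= rsum l h) by (apply IHl; intros; apply H; simpl; auto). lra. Qed.
Lemma rsum_nonneg l g : (forall x, In x l -> 0 <= g x) -> 0 <= rsum l g.
Proof. intros H. replace 0 with (rsum l (fun _ => 0)).
  apply rsum_le; auto. induction l; simpl; auto. unfold rsum in *; simpl; rewrite IHl; [ring|].
  intros; apply H; simpl; auto. Qed.
Lemma rsum_plus l g h : rsum l (fun x => g x + h x) = rsum l g + rsum l h.
Proof. induction l; [rewrite !rsum_nil; ring|]. rewrite !rsum_cons, IHl. ring. Qed.
Lemma rsum_scal l c g : rsum l (fun x => c * g x) = c * rsum l g.
Proof. induction l; [rewrite !rsum_nil; ring|]. rewrite !rsum_cons, IHl. ring. Qed.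
Lemma rsum_const l c : rsum l (fun _ => c) = INR (length l) * c.
Proof. induction l; [rewrite rsum_nil; simpl; ring|]. rewrite rsum_cons, IHl. simpl length. rewrite S_INR. ring. Qed.
Lemma rsum_swap l1 l2 (g : Z -> Z -> R) :
  rsum l1 (fun x => rsum l2 (fun y => g x y)) = rsum l2 (fun y => rsum l1 (fun x => g x y)).
Proof. induction l1.
  - simpl. induction l2; simpl; auto. unfold rsum in *; simpl in *. rewrite <- IHl2. ring.
  - rewrite rsum_cons, IHl1. rewrite <- rsum_plus. apply rsum_ext. intros. rewrite rsum_cons. auto. Qed.

Definition csum (l : list Z) (g : Z -> C) : C := fold_right Cplus 0%C (map g l).
Lemma sumZ_csum K g : sumZ K g = csum (zrange K) g.
Proof. reflexivity. Qed.
Lemma csum_ext l g h : (forall x, In x l -> g x = h x) -> csum l g = csum l h.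
Proof. induction l; intros H; [reflexivity|]. unfold csum in *; simpl. rewrite H by (simpl; auto).
  rewrite IHl; auto. intros; apply H; simpl; auto. Qed.
Lemma csum_plus l g h : csum l (fun x => g x + h x)%C = (csum l g + csum l h)%C.
Proof. induction l; unfold csum in *; simpl. { apply injective_projections; simpl; ring. }
  rewrite IHl. apply injective_projections; simpl; ring. Qed.
Lemma csum_scal l c g : csum l (fun x => c * g x)%C = (c * csum l g)%C.
Proof. induction l; unfold csum in *; simpl. { apply injective_projections; simpl; ring. }
  rewrite IHl. apply injective_projections; simpl; ring. Qed.
Lemma Cmod_csum l g : Cmod (csum l g) <= rsum l (fun x => Cmod (g x)).
Proof. induction l; unfold csum, rsum in *; simpl. { rewrite Cmod_0; lra. }
  eapply Rle_trans; [apply Cmod_triangle|]. lra. Qed.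

Fixpoint intl (p : Z) (n : nat) : list Z :=
  match n with O => nil | S k => p :: intl (p + 1)%Z k end.
Lemma intl_app p a b : intl p (a + b) = intl p a ++ intl (p + Z.of_nat a)%Z b.
Proof. revert p; induction a; intros p; simpl. { f_equal; lia. }
  rewrite IHa. f_equal. f_equal. f_equal. lia. Qed.
Lemma map_seq_intl K s n : map (fun i => (Z.of_nat i - Z.of_nat K)%Z) (seq s n) = intl (Z.of_nat s - Z.of_nat K)%Z n.
Proof. revert s; induction n; intros s; simpl; auto. rewrite IHn. f_equal. f_equal. lia. Qed.
Lemma zrange_intl K : zrange K = intl (- Z.of_nat K)%Z (2 * K + 1).
Proof. unfold zrange. rewrite map_seq_intl. f_equal. Qed.
Lemma In_intl p n x : In x (intl p n) <-> (p <= x < p + Z.of_nat n)%Z.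
Proof. revert p; induction n; intros p; simpl. { lia. } rewrite IHn. lia. Qed.
Lemma In_zrange K x : In x (zrange K) <-> (Z.abs x <= Z.of_nat K)%Z.
Proof. rewrite zrange_intl, In_intl. lia. Qed.
Lemma length_intl p n : length (intl p n) = n.
Proof. revert p; induction n; simpl; auto. Qed.

Lemma rsum_zero_outside l g : (forall x, In x l -> g x = 0) -> rsum l g = 0.
Proof. intros H. rewrite (rsum_ext l g (fun _ => 0)); auto. rewrite rsum_const; ring. Qed.

Lemma rsum_restrict (K M : nat) g : (M <= K)%nat ->
  (forall x, (Z.of_nat M < Z.abs x)%Z -> g x = 0) -> rsum (zrange K) g = rsum (zrange M) g.
Proof. intros HMK H. rewrite !zrange_intl.
  replace (2 * K + 1)%nat with ((K - M) + ((2 * M + 1) + (K - M)))%nat by lia.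
  rewrite intl_app, intl_app, !rsum_app.
  replace (- Z.of_nat K + Z.of_nat (K - M))%Z with (- Z.of_nat M)%Z by lia.
  rewrite (rsum_zero_outside (intl (- Z.of_nat K) (K - M))).
  rewrite (rsum_zero_outside (intl _ (K - M))). ring.
  all: intros x Hx; apply H; rewrite In_intl in Hx; lia. Qed.

Lemma rsum_box_bound (K M : nat) g B : (M <= K)%nat ->
  (forall x, (Z.of_nat M < Z.abs x)%Z -> g x = 0) -> (forall x, g x <= B) ->
  rsum (zrange K) g <= INR (2 * M + 1) * B.
Proof. intros HMK H HB. rewrite (rsum_restrict K M); auto.
  rewrite <- (length_intl (- Z.of_nat M) (2*M+1)), <- rsum_const, <- zrange_intl.
  apply rsum_le; auto. Qed.

Lemma fold_rev_comm (l : list Z) (g : Z -> R) :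
  fold_right Rplus 0 (map g (rev l)) = fold_right Rplus 0 (map g l).
Proof. induction l; simpl; auto. rewrite map_app, fold_right_app. simpl.
  rewrite <- IHl. generalize (map g (rev l)). intros l'. replace (g a + 0) with (g a) by ring.
  induction l'; simpl. ring. rewrite IHl'. ring. Qed.
Lemma fold_rev_commC (l : list Z) (g : Z -> C) :
  fold_right Cplus 0%C (map g (rev l)) = fold_right Cplus 0%C (map g l).
Proof. induction l; simpl; auto. rewrite map_app, fold_right_app. simpl.
  rewrite <- IHl. generalize (map g (rev l)). intros l'.
  induction l'; simpl. apply injective_projections; simpl; ring. rewrite IHl'. apply injective_projections; simpl; ring. Qed.

Lemma intl_rev p n : rev (intl p n) = map Z.opp (intl (- (p + Z.of_nat n) + 1)%Z n).
Proof. revert p; induction n; intros p; [simpl; auto|].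
  change (rev (intl p (S n))) with (rev (intl (p+1)%Z n) ++ p :: nil). rewrite IHn.
  replace (S n) with (n + 1)%nat by lia. rewrite intl_app, map_app. simpl.
  f_equal. f_equal. f_equal. lia. f_equal. lia. Qed.
Lemma zrange_rev K : rev (zrange K) = map Z.opp (zrange K).
Proof. rewrite zrange_intl, intl_rev. f_equal. f_equal. lia. Qed.

Lemma rsum_refl K g : rsum (zrange K) g = rsum (zrange K) (fun x => g (- x)%Z).
Proof. unfold rsum. rewrite <- fold_rev_comm, zrange_rev, map_map. reflexivity. Qed.
Lemma csum_refl K g : csum (zrange K) g = csum (zrange K) (fun x => g (- x)%Z).
Proof. unfold csum. rewrite <- fold_rev_commC, zrange_rev, map_map. reflexivity. Qed.

Definition psi (k : Z) : R := 8 / IZR (Z.max k 1).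

Lemma psi_pos k : 0 < psi k.
Proof. unfold psi. apply Rdiv_lt_0_compat; [lra|]. apply IZR_lt. lia. Qed.

Lemma psi_mono k l : (0 <= k <= l)%Z -> psi l <= psi k.
Proof. intros H. unfold psi. unfold Rdiv. apply Rmult_le_compat_l; [lra|].
  apply Rinv_le_contravar. apply IZR_lt; lia. apply IZR_le; lia. Qed.

Definition Ht (y : Z) (m : Z) : R := if Z_le_dec y m then psi (m - y) else 0.

Lemma Ht_nonneg y m : 0 <= Ht y m.
Proof. unfold Ht. destruct Z_le_dec; [left; apply psi_pos| lra]. Qed.

Lemma L0 n : forall p q y, (0 <= q)%Z -> (q <= p - y)%Z ->
  rsum (intl p n) (Ht y) <= rsum (intl q n) psi.
Proof. induction n; intros p q y Hq Hpq; simpl intl. { rewrite !rsum_nil; lra. }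
  rewrite !rsum_cons. assert (Ht y p <= psi q).
  { unfold Ht. destruct Z_le_dec; [apply psi_mono; lia| lia]. }
  assert (rsum (intl (p+1) n) (Ht y) <= rsum (intl (q+1) n) psi) by (apply IHn; lia). lra. Qed.

Lemma rsum_psi_nonneg p n : 0 <= rsum (intl p n) psi.
Proof. apply rsum_nonneg. intros; left; apply psi_pos. Qed.

Lemma rsum_intl_S p n g : rsum (intl p (S n)) g = rsum (intl p n) g + g (p + Z.of_nat n)%Z.
Proof. replace (S n) with (n + 1)%nat by lia. rewrite intl_app, rsum_app. simpl.
  rewrite rsum_cons, rsum_nil. ring. Qed.

Lemma L1 n : forall p y, rsum (intl p n) (Ht y) <= rsum (intl 0 n) psi.
Proof. induction n; intros p y. { simpl; rewrite !rsum_nil; lra. }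
  destruct (Z_le_dec y p). { apply L0; lia. }
  simpl intl at 1. rewrite rsum_cons. unfold Ht at 1. destruct Z_le_dec; [lia|].
  rewrite rsum_intl_S. specialize (IHn (p+1)%Z y). pose proof (psi_pos (0 + Z.of_nat n)). lra. Qed.

Lemma sum_dist (M : nat) (x : Z) :
  rsum (zrange M) (fun m => psi (Z.abs (m - x))) <= 2 * rsum (intl 0 (2 * M + 1)) psi.
Proof.
  apply Rle_trans with (rsum (zrange M) (fun m => Ht x m + Ht (- x)%Z (- m)%Z)).
  { apply rsum_le. intros m _. unfold Ht. destruct (Z_le_dec x m).
    - destruct Z_le_dec. replace (Z.abs (m - x)) with (m - x)%Z by lia. pose proof (psi_pos (-m - - x)); lra.
      replace (Z.abs (m - x)) with (m - x)%Z by lia. lra.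
    - destruct Z_le_dec; [|lia]. replace (Z.abs (m - x)) with (- m - - x)%Z by lia. lra. }
  rewrite rsum_plus. rewrite (rsum_refl M (fun m => Ht (-x) (- m))).
  rewrite (rsum_ext _ (fun x0 => Ht (- x) (- - x0)) (Ht (-x))) by (intros; f_equal; lia).
  rewrite !zrange_intl. pose proof (L1 (2*M+1) (- Z.of_nat M) x). pose proof (L1 (2*M+1) (- Z.of_nat M) (-x)). lra. Qed.

Lemma ln_ge_1_minus y : 0 < y -> 1 - / y <= ln y.
Proof. intros Hy. assert (Hz : 0 < / y) by (apply Rinv_0_lt_compat; lra).
  pose proof (exp_ineq1_le (ln (/ y))). rewrite exp_ln in H by lra. rewrite ln_Rinv in H by lra. lra. Qed.

Lemma harm n : rsum (intl 1 (S n)) (fun k => / IZR k) <= 1 + ln (INR (S n)).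
Proof. induction n. { simpl. rewrite rsum_cons, rsum_nil. rewrite ln_1. replace (/ 1) with 1 by field. lra. }
  rewrite rsum_intl_S. replace (1 + Z.of_nat (S n))%Z with (Z.of_nat (S (S n))) by lia.
  rewrite <- INR_IZR_INZ.
  assert (ln (INR (S (S n))) - ln (INR (S n)) >= / INR (S (S n))).
  { unfold Rminus. rewrite <- ln_Rinv by (apply lt_0_INR; lia). rewrite <- ln_mult.
    2: apply lt_0_INR; lia. 2: apply Rinv_0_lt_compat, lt_0_INR; lia.
    pose proof (ln_ge_1_minus (INR (S (S n)) * / INR (S n))).
    rewrite !S_INR in *. pose proof (pos_INR n).
    assert (1 - / ((INR n + 1 + 1) * / (INR n + 1)) = / (INR n + 1 + 1)) by (field; lra).
    rewrite H1 in H. apply Rle_ge, H. apply Rmult_lt_0_compat; [lra| apply Rinv_0_lt_compat; lra]. }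
  lra. Qed.

Lemma Hbound n : rsum (intl 0 (S n)) psi <= 16 + 8 * ln (INR (S n)).
Proof. destruct n. { simpl. rewrite rsum_cons, rsum_nil. unfold psi. simpl. rewrite ln_1. replace (Z.max 0 1) with 1%Z by reflexivity. lra. }
  replace (S (S n)) with (1 + S n)%nat by lia. rewrite intl_app, rsum_app. simpl (intl 0 1).
  rewrite rsum_cons, rsum_nil. replace (0 + Z.of_nat 1)%Z with 1%Z by lia.
  rewrite (rsum_ext _ psi (fun k => 8 * / IZR k)).
  2: { intros x Hx. apply In_intl in Hx. unfold psi. rewrite Z.max_l by lia. reflexivity. }
  rewrite rsum_scal. pose proof (harm n).
  assert (ln (INR (S n)) <= ln (INR (1 + S n))).
  { destruct (Req_dec (INR (S n)) (INR (1 + S n))) as [E|E]; [rewrite E; lra|]. left. apply ln_increasing. apply lt_0_INR; lia. apply lt_INR. lia. }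
  replace (psi 0%Z) with 8 by (unfold psi; replace (Z.max 0 1) with 1%Z by reflexivity; unfold Rdiv; rewrite Rinv_1; ring). lra. Qed.

Definition mn (x : R) : R := if Rle_dec (Rabs x) 1 then 1 else / Rabs x.
Lemma mn_le1 x : mn x <= 1.
Proof. unfold mn. destruct Rle_dec; [lra|]. rewrite <- Rinv_1. apply Rinv_le_contravar; lra. Qed.
Lemma mn_nonneg x : 0 <= mn x.
Proof. unfold mn. destruct Rle_dec; [lra|]. left; apply Rinv_0_lt_compat; lra. Qed.
Lemma mn_le_inv x y : 0 < y -> y <= Rabs x -> mn x <= / y.
Proof. intros Hy H. unfold mn. destruct Rle_dec.
  - rewrite <- Rinv_1 at 1. destruct (Rle_dec y 1).
    + apply Rinv_le_contravar; lra.
    + lra.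
  - apply Rinv_le_contravar; lra. Qed.
Lemma mn_opp x : mn (- x) = mn x.
Proof. unfold mn. rewrite Rabs_Ropp. reflexivity. Qed.

Lemma list_min (l : list Z) (g : Z -> R) : l <> nil -> exists x, In x l /\ forall y, In y l -> g x <= g y.
Proof. induction l; intros H; [congruence|]. destruct l as [|b l].
  - exists a. split; [simpl; auto|]. intros y [<-|[]]; lra.
  - destruct IHl as [x [Hx Hm]]; [congruence|]. destruct (Rle_dec (g a) (g x)).
    + exists a. split; [simpl; auto|]. intros y [<-|Hy]; [lra|]. specialize (Hm y Hy); lra.
    + exists x. split; [simpl; auto|]. intros y [<-|Hy]; [lra|]. auto. Qed.

Definition indP (P : Prop) : R := if excluded_middle_informative P then 1 else 0.

Lemma indP_true (P : Prop) : P -> indP P = 1.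
Proof. intros H. unfold indP. destruct excluded_middle_informative; tauto. Qed.
Lemma indP_false (P : Prop) : ~ P -> indP P = 0.
Proof. intros H. unfold indP. destruct excluded_middle_informative; tauto. Qed.
Lemma indP_range P : 0 <= indP P <= 1.
Proof. unfold indP. destruct excluded_middle_informative; lra. Qed.

Definition Bnd (M : nat) : R := 2 * (16 + 8 * ln (INR (2 * M + 1))).

Lemma Bnd_pos M : 0 < Bnd M.
Proof. unfold Bnd. assert (0 <= ln (INR (2 * M + 1))).
  { rewrite <- ln_1. destruct (Req_dec 1 (INR (2 * M + 1))) as [E|E]; [rewrite E; lra|].
    left. apply ln_increasing; [lra|]. rewrite plus_INR, mult_INR. simpl. pose proof (pos_INR M).
    assert (INR M <> 0). { intros E'. apply E. rewrite plus_INR, mult_INR, E'. simpl; ring. } 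
    assert (0 < INR M) by lra. lra. }
  lra. Qed.

Lemma oneD (K M : nat) (S : Z -> Prop) (v : Z -> R) (lam : R) :
  (M <= K)%nat -> (forall m, S m -> (Z.abs m <= Z.of_nat M)%Z) ->
  (forall m m', S m -> S m' -> IZR (Z.abs (m - m')) / 4 <= Rabs (v m - v m')) ->
  rsum (zrange K) (fun m => indP (S m) * mn (lam - v m)) <= Bnd M.
Proof.
  intros HMK HS Hgap.
  set (l := filter (fun m => if excluded_middle_informative (S m) then true else false) (zrange K)).
  assert (Hl : forall m, In m l <-> In m (zrange K) /\ S m).
  { intros m. unfold l. rewrite filter_In. destruct excluded_middle_informative; intuition congruence. }
  destruct (list_eq_dec Z.eq_dec l nil) as [E|E].
  - rewrite rsum_zero_outside. left; apply Bnd_pos.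
    intros m Hm. rewrite indP_false; [ring|]. intros Sm. assert (In m l) by (apply Hl; auto). rewrite E in H; auto.
  - destruct (list_min l (fun m => Rabs (lam - v m)) E) as [x [Hx Hmin]].
    apply Hl in Hx. destruct Hx as [_ Sx].
    set (g := fun m => if Z_le_dec (Z.abs m) (Z.of_nat M) then psi (Z.abs (m - x)) else 0).
    apply Rle_trans with (rsum (zrange K) g).
    { apply rsum_le. intros m Hm. unfold g. destruct (excluded_middle_informative (S m)) as [Sm|Sm].
      - rewrite indP_true by auto. rewrite Rmult_1_l. destruct Z_le_dec; [|specialize (HS m Sm); lia].
        assert (Hd : IZR (Z.abs (m - x)) / 8 <= Rabs (lam - v m)).
        { pose proof (Hgap m x Sm Sx). assert (Rabs (lam - v x) <= Rabs (lam - v m)) by (apply Hmin; apply Hl; auto).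
          assert (Rabs (v m - v x) <= Rabs (lam - v m) + Rabs (lam - v x)).
          { replace (v m - v x) with (- (lam - v m) + (lam - v x)) by ring.
            eapply Rle_trans; [apply Rabs_triang|]. rewrite Rabs_Ropp. lra. }
          lra. }
        destruct (Z.eq_dec (Z.abs (m - x)) 0) as [Z0|Z0].
        + rewrite Z0. unfold psi. replace (Z.max 0 1) with 1%Z by reflexivity. pose proof (mn_le1 (lam - v m)).
          replace (8 / IZR 1) with 8 by (unfold Rdiv; rewrite Rinv_1; ring). lra.
        + assert (Hk : 1 <= IZR (Z.abs (m - x))) by (apply IZR_le; lia).
          eapply Rle_trans. apply (mn_le_inv _ (IZR (Z.abs (m - x)) / 8)); [lra| exact Hd].
          unfold psi. rewrite Z.max_l by lia. right. field. lra.
      - rewrite indP_false by auto. rewrite Rmult_0_l. destruct Z_le_dec; [left; apply psi_pos| lra]. }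
    rewrite (rsum_restrict K M g HMK).
    2: { intros y Hy. unfold g. destruct Z_le_dec; [lia| reflexivity]. }
    rewrite (rsum_ext _ g (fun m => psi (Z.abs (m - x)))).
    2: { intros y Hy. apply In_zrange in Hy. unfold g. destruct Z_le_dec; [reflexivity| lia]. }
    eapply Rle_trans; [apply sum_dist|]. unfold Bnd.
    replace (2 * M + 1)%nat with (Datatypes.S (2 * M)) by lia. pose proof (Hbound (2 * M)%nat). lra.
Qed.

Definition Vfun (q qa b m : R) : R := sqrt (1 + qa + (b + m) ^ 2) + sqrt (1 + q + m ^ 2).

Lemma Vstep q qa b m : 0 <= q <= 2 * m ^ 2 -> 0 <= qa -> Rabs b <= m ->
  Vfun q qa b m + 1 / 4 <= Vfun q qa b (m + 1).
Proof. intros Hq Hqa Hb. unfold Vfun.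
  assert (Hm : 0 <= m) by (pose proof (Rabs_pos b); lra).
  assert (sqrt (1 + qa + (b + m) ^ 2) <= sqrt (1 + qa + (b + (m + 1)) ^ 2)).
  { apply sqrt_le_1_alt. assert (0 <= b + m) by (pose proof (Rle_abs (- b)); rewrite Rabs_Ropp in H; lra). nra. }
  set (X := 1 + q + (m + 1) ^ 2). set (Y := 1 + q + m ^ 2).
  assert (HX : 0 <= X) by (unfold X; nra). assert (HY : 0 <= Y) by (unfold Y; nra).
  pose proof (sqrt_sqrt X HX). pose proof (sqrt_sqrt Y HY). pose proof (sqrt_pos X). pose proof (sqrt_pos Y).
  assert (sqrt X <= 2 * (m + 1)).
  { rewrite <- (sqrt_square (2 * (m + 1))) by lra. apply sqrt_le_1_alt. unfold X. nra. }
  assert (sqrt Y <= 2 * (m + 1)).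
  { rewrite <- (sqrt_square (2 * (m + 1))) by lra. apply sqrt_le_1_alt. unfold Y. nra. }
  assert (sqrt Y <= sqrt X) by (apply sqrt_le_1_alt; unfold X, Y; nra).
  assert (Hd : (sqrt X - sqrt Y) * (sqrt X + sqrt Y) = 2 * m + 1) by (unfold X, Y in *; nra).
  assert (sqrt X - sqrt Y >= 1/4) by nra.
  lra. Qed.

Lemma Vgap_nat q qa b d : forall m, 0 <= q <= 2 * m ^ 2 -> 0 <= qa -> Rabs b <= m ->
  Vfun q qa b m + INR d / 4 <= Vfun q qa b (m + INR d).
Proof. induction d; intros m Hq Hqa Hb. { simpl. replace (m + 0) with m by ring. lra. }
  rewrite S_INR. pose proof (Vstep q qa b m Hq Hqa Hb).
  assert (Hm : 0 <= m) by (pose proof (Rabs_pos b); lra).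
  specialize (IHd (m + 1)). replace (m + (INR d + 1)) with (m + 1 + INR d) by ring.
  assert (Vfun q qa b (m + 1) + INR d / 4 <= Vfun q qa b (m + 1 + INR d)) by (apply IHd; [nra|lra|lra]).
  lra. Qed.

Lemma Vgap_Z q qa b (m m' : Z) :
  0 <= q <= 2 * (IZR m) ^ 2 -> 0 <= qa -> Rabs b <= IZR m ->
  0 <= q <= 2 * (IZR m') ^ 2 -> Rabs b <= IZR m' ->
  IZR (Z.abs (m - m')) / 4 <= Rabs (Vfun q qa b (IZR m) - Vfun q qa b (IZR m')).
Proof. intros H1 H2 H3 H4 H5. destruct (Z_le_dec m m').
  - pose proof (Vgap_nat q qa b (Z.to_nat (m' - m)) (IZR m) H1 H2 H3).
    rewrite INR_IZR_INZ, Z2Nat.id in H by lia. rewrite <- plus_IZR in H. replace (m + (m' - m))%Z with m' in H by ring.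
    replace (Z.abs (m - m')) with (m' - m)%Z by lia. assert (0 <= IZR (m' - m)) by (apply IZR_le; lia). rewrite Rabs_minus_sym, Rabs_right; lra.
  - pose proof (Vgap_nat q qa b (Z.to_nat (m - m')) (IZR m') H4 H2 H5).
    rewrite INR_IZR_INZ, Z2Nat.id in H by lia. rewrite <- plus_IZR in H. replace (m' + (m - m'))%Z with m in H by ring.
    replace (Z.abs (m - m')) with (m - m')%Z by lia. assert (0 <= IZR (m - m')) by (apply IZR_le; lia). rewrite Rabs_right; lra. Qed.

Lemma gap_generic (q qa b : R) (sg : Z) (w : Z -> R) (Sx : Z -> Prop) :
  (sg = 1 \/ sg = -1)%Z -> 0 <= q -> 0 <= qa ->
  (forall m, Sx m -> (0 <= sg * m)%Z /\ q <= 2 * (IZR m) ^ 2 /\ b ^ 2 <= (IZR m) ^ 2) ->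
  (forall m, w m = Vfun q qa (IZR sg * b) (IZR (sg * m))) ->
  forall m m', Sx m -> Sx m' -> IZR (Z.abs (m - m')) / 4 <= Rabs (w m - w m').
Proof. intros Hsg Hq Hqa HS Hw m m' Hm Hm'. rewrite !Hw.
  replace (Z.abs (m - m')) with (Z.abs (sg * m - sg * m')) by (destruct Hsg; subst; lia).
  destruct (HS m Hm) as [A1 [A2 A3]]. destruct (HS m' Hm') as [B1 [B2 B3]].
  assert (Esq : forall x, IZR (sg * x) ^ 2 = IZR x ^ 2) by (intros x; destruct Hsg; subst; [replace (1*x)%Z with x by ring | replace (-1*x)%Z with (-x)%Z by ring; rewrite opp_IZR]; ring).
  assert (Eb : Rabs (IZR sg * b) = Rabs b) by (destruct Hsg; subst; [replace (IZR 1 * b) with b by ring; reflexivity | replace (IZR (-1) * b) with (- b) by ring; apply Rabs_Ropp]).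
  assert (Hb : forall x, (0 <= sg * x)%Z -> b ^ 2 <= IZR x ^ 2 -> Rabs b <= IZR (sg * x)).
  { intros x H1 H2. apply IZR_le in H1. rewrite <- (Esq x) in H2. set (y := IZR (sg * x)) in *.
    destruct (Rle_dec 0 b); [rewrite Rabs_right by lra | rewrite Rabs_left by lra]; nra. }
  apply Vgap_Z; rewrite ?Esq, ?Eb; auto. Qed.

Definition shell (N : R) (n : Z3) : Prop := N / 2 < Z3norm n < 2 * N.
Definition om (a n : Z3) : R := jbr (Z3add a n) + jbr n.

Lemma Z3norm_sq x y z : Z3norm (x, y, z) ^ 2 = IZR x ^ 2 + IZR y ^ 2 + IZR z ^ 2.
Proof. unfold Z3norm. apply pow2_sqrt. nra. Qed.
Lemma Z3norm_nonneg n : 0 <= Z3norm n.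
Proof. destruct n as [[x y] z]. unfold Z3norm. apply sqrt_pos. Qed.
Lemma jbr_coord x y z : jbr (x, y, z) = sqrt (1 + IZR x ^ 2 + IZR y ^ 2 + IZR z ^ 2).
Proof. unfold jbr. rewrite Z3norm_sq. f_equal. ring. Qed.

Lemma coord_le_norm (N : R) (M : nat) (c q : R) (m : Z) : INR M = 2 * N ->
  IZR m ^ 2 + q < (2 * N) ^ 2 -> 0 <= q -> 0 <= N -> (Z.abs m <= Z.of_nat M)%Z.
Proof. intros HM H Hq HN. assert (IZR (Z.abs m) < INR M).
  { rewrite HM. rewrite abs_IZR. destruct (Rle_dec 0 (IZR m)); [rewrite Rabs_right by lra| rewrite Rabs_left by lra]; nra. }
  rewrite INR_IZR_INZ in H0. apply lt_IZR in H0. lia. Qed.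

Lemma inner3 (K M : nat) (G : Z -> Z -> Z -> R) B : (M <= K)%nat -> 0 <= B ->
  (forall x y, rsum (zrange K) (G x y) <= B) ->
  (forall x y z, ((Z.of_nat M < Z.abs x)%Z \/ (Z.of_nat M < Z.abs y)%Z) -> G x y z = 0) ->
  rsum (zrange K) (fun x => rsum (zrange K) (fun y => rsum (zrange K) (G x y)))
   <= INR (2 * M + 1) * (INR (2 * M + 1) * B).
Proof. intros HMK HB Hin H0. apply rsum_box_bound; auto.
  - intros x Hx. apply rsum_zero_outside. intros y _. apply rsum_zero_outside. intros z _. apply H0; auto.
  - intros x. apply rsum_box_bound; auto.
    intros y Hy. apply rsum_zero_outside. intros z _. apply H0; auto. Qed.

Section Case.
Variables (N : R) (M K : nat) (a : Z3) (lam : R) (E : Z -> Z -> Z -> Z3) (sg ao ap am : Z).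
Hypothesis HN : 1 <= N.
Hypothesis HM : INR M = 2 * N.
Hypothesis HMK : (M <= K)%nat.
Hypothesis Hsg : (sg = 1 \/ sg = -1)%Z.
Hypothesis Ham : IZR am ^ 2 <= N ^ 2 / 16.
Hypothesis HEn : forall o p m, Z3norm (E o p m) ^ 2 = IZR o ^ 2 + IZR p ^ 2 + IZR m ^ 2.
Hypothesis HEom : forall o p m, om a (E o p m) =
  sqrt (1 + (IZR ao + IZR o) ^ 2 + (IZR ap + IZR p) ^ 2 + (IZR am + IZR m) ^ 2)
  + sqrt (1 + IZR o ^ 2 + IZR p ^ 2 + IZR m ^ 2).

Definition caseP (o p m : Z) : Prop :=
  shell N (E o p m) /\ (0 <= sg * m)%Z /\ (o * o + p * p <= 2 * (m * m))%Z.

Lemma shell_sq o p m : shell N (E o p m) ->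
  N ^ 2 / 4 < IZR o ^ 2 + IZR p ^ 2 + IZR m ^ 2 < 4 * N ^ 2.
Proof. intros [H1 H2]. rewrite <- HEn. pose proof (Z3norm_nonneg (E o p m)). split; nra. Qed.

Lemma case_bound :
  rsum (zrange K) (fun o => rsum (zrange K) (fun p => rsum (zrange K) (fun m =>
     indP (caseP o p m) * mn (lam - om a (E o p m)))))
  <= INR (2 * M + 1) * (INR (2 * M + 1) * Bnd M).
Proof.
  apply inner3; auto. left; apply Bnd_pos.
  - intros o p. apply oneD; auto.
    + intros m [Hs _]. apply shell_sq in Hs. apply (coord_le_norm N M 0 (IZR o ^ 2 + IZR p ^ 2)); auto; nra.
    + refine (gap_generic (IZR o ^ 2 + IZR p ^ 2) ((IZR ao + IZR o) ^ 2 + (IZR ap + IZR p) ^ 2) (IZR am) sg _ _ Hsg _ _ _ _).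
      * apply Rplus_le_le_0_compat; apply pow2_ge_0.
      * apply Rplus_le_le_0_compat; apply pow2_ge_0.
      * intros m [Hs [H1 H2]]. apply shell_sq in Hs. apply IZR_le in H2. rewrite !plus_IZR, !mult_IZR in H2.
        split; auto. split; [nra|]. nra.
      * intros m. rewrite HEom. unfold Vfun. rewrite mult_IZR.
        destruct Hsg; subst; f_equal; f_equal; simpl; ring.
  - intros o p m Ho. rewrite indP_false; [ring|]. intros [Hs _]. apply shell_sq in Hs.
    destruct Ho as [Ho|Ho].
    + assert (Z.abs o <= Z.of_nat M)%Z by (apply (coord_le_norm N M 0 (IZR p ^ 2 + IZR m ^ 2)); auto; nra). lia.
    + assert (Z.abs p <= Z.of_nat M)%Z by (apply (coord_le_norm N M 0 (IZR o ^ 2 + IZR m ^ 2)); auto; nra). lia.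
Qed.
End Case.

Definition rsum3 (K : nat) (g : Z3 -> R) : R :=
  rsum (zrange K) (fun x => rsum (zrange K) (fun y => rsum (zrange K) (fun z => g (x, y, z)))).

Lemma rsum3_le K g h : (forall n, g n <= h n) -> rsum3 K g <= rsum3 K h.
Proof. intros H. unfold rsum3. apply rsum_le; intros; apply rsum_le; intros; apply rsum_le; intros; apply H. Qed.
Lemma rsum3_plus K g h : rsum3 K (fun n => g n + h n) = rsum3 K g + rsum3 K h.
Proof. unfold rsum3. rewrite <- rsum_plus. apply rsum_ext; intros. rewrite <- rsum_plus. apply rsum_ext; intros.
  apply rsum_plus. Qed.
Lemma rsum3_nonneg K g : (forall n, 0 <= g n) -> 0 <= rsum3 K g.
Proof. intros H. unfold rsum3. apply rsum_nonneg; intros; apply rsum_nonneg; intros; apply rsum_nonneg; intros; apply H. Qed.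

Lemma om_coord a1 a2 a3 x y z : om (a1, a2, a3) (x, y, z) =
  sqrt (1 + (IZR a1 + IZR x) ^ 2 + (IZR a2 + IZR y) ^ 2 + (IZR a3 + IZR z) ^ 2)
  + sqrt (1 + IZR x ^ 2 + IZR y ^ 2 + IZR z ^ 2).
Proof. unfold om. simpl Z3add. rewrite !jbr_coord, !plus_IZR. reflexivity. Qed.

Lemma count_bound (N : R) (M K : nat) (a1 a2 a3 : Z) (lam : R) :
  1 <= N -> INR M = 2 * N -> (M <= K)%nat ->
  IZR a1 ^ 2 <= N ^ 2 / 16 -> IZR a2 ^ 2 <= N ^ 2 / 16 -> IZR a3 ^ 2 <= N ^ 2 / 16 ->
  rsum3 K (fun n => indP (shell N n) * mn (lam - om (a1, a2, a3) n))
  <= 6 * (INR (2 * M + 1) * (INR (2 * M + 1) * Bnd M)).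
Proof.
  intros HN HM HMK H1 H2 H3. set (a := (a1, a2, a3)).
  set (B := INR (2 * M + 1) * (INR (2 * M + 1) * Bnd M)).
  set (E3 := fun o p m : Z => (o, p, m)). set (E2 := fun o p m : Z => (o, m, p)). set (E1 := fun o p m : Z => (m, o, p)).
  set (F := fun n => mn (lam - om a n)).
  set (c3 := fun (sg : Z) (n : Z3) => match n with (x, y, z) => caseP N E3 sg x y z end).
  set (c2 := fun (sg : Z) (n : Z3) => match n with (x, y, z) => caseP N E2 sg x z y end).
  set (c1 := fun (sg : Z) (n : Z3) => match n with (x, y, z) => caseP N E1 sg y z x end).
  apply Rle_trans with (rsum3 K (fun n =>
     indP (c3 1%Z n) * F n + indP (c3 (-1)%Z n) * F n + indP (c2 1%Z n) * F n
   + indP (c2 (-1)%Z n) * F n + indP (c1 1%Z n) * F n + indP (c1 (-1)%Z n) * F n)).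
  { apply rsum3_le. intros [[x y] z]. fold (F (x, y, z)).
    pose proof (mn_nonneg (lam - om a (x, y, z))). fold (F (x,y,z)) in H.
    assert (forall P, 0 <= indP P * F (x, y, z)) by (intros; pose proof (indP_range P); nra).
    destruct (excluded_middle_informative (shell N (x, y, z))) as [Hs|Hs].
    2: { rewrite indP_false by auto. pose proof (H0 (c3 1%Z (x,y,z))). pose proof (H0 (c3 (-1)%Z (x,y,z))).
      pose proof (H0 (c2 1%Z (x,y,z))). pose proof (H0 (c2 (-1)%Z (x,y,z))).
      pose proof (H0 (c1 1%Z (x,y,z))). pose proof (H0 (c1 (-1)%Z (x,y,z))). lra. }
    rewrite indP_true by auto.
    pose proof (H0 (c3 1%Z (x,y,z))). pose proof (H0 (c3 (-1)%Z (x,y,z))).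
    pose proof (H0 (c2 1%Z (x,y,z))). pose proof (H0 (c2 (-1)%Z (x,y,z))).
    pose proof (H0 (c1 1%Z (x,y,z))). pose proof (H0 (c1 (-1)%Z (x,y,z))).
    simpl c3 in *; simpl c2 in *; simpl c1 in *. unfold caseP in *.
    destruct (Z_le_dec (x * x + y * y) (2 * (z * z))) as [Hz|Hz].
    { destruct (Z_le_dec 0 z).
      - rewrite (indP_true (shell N (E3 x y z) /\ (0 <= 1 * z)%Z /\ _)) by (unfold E1, E2, E3; split; [exact Hs| split; lia]). lra.
      - rewrite (indP_true (shell N (E3 x y z) /\ (0 <= -1 * z)%Z /\ _)) by (unfold E1, E2, E3; split; [exact Hs| split; lia]). lra. }
    destruct (Z_le_dec (x * x + z * z) (2 * (y * y))) as [Hy|Hy].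
    { destruct (Z_le_dec 0 y).
      - rewrite (indP_true (shell N (E2 x z y) /\ (0 <= 1 * y)%Z /\ _)) by (unfold E1, E2, E3; split; [exact Hs| split; lia]). lra.
      - rewrite (indP_true (shell N (E2 x z y) /\ (0 <= -1 * y)%Z /\ _)) by (unfold E1, E2, E3; split; [exact Hs| split; lia]). lra. }
    assert (Hx : (y * y + z * z <= 2 * (x * x))%Z) by nia.
    destruct (Z_le_dec 0 x).
    - rewrite (indP_true (shell N (E1 y z x) /\ (0 <= 1 * x)%Z /\ _)) by (unfold E1, E2, E3; split; [exact Hs| split; lia]). lra.
    - rewrite (indP_true (shell N (E1 y z x) /\ (0 <= -1 * x)%Z /\ _)) by (unfold E1, E2, E3; split; [exact Hs| split; lia]). lra. }
  rewrite !rsum3_plus.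
  assert (C3 : forall sg, (sg = 1 \/ sg = -1)%Z -> rsum3 K (fun n => indP (c3 sg n) * F n) <= B).
  { intros sg Hsg. unfold rsum3. simpl c3.
    apply (case_bound N M K a lam E3 sg a1 a2 a3); auto.
    - intros. unfold E3. apply Z3norm_sq.
    - intros. unfold E3, a. rewrite om_coord. reflexivity. }
  assert (C2 : forall sg, (sg = 1 \/ sg = -1)%Z -> rsum3 K (fun n => indP (c2 sg n) * F n) <= B).
  { intros sg Hsg. unfold rsum3. simpl c2.
    rewrite (rsum_ext _ _ (fun x => rsum (zrange K) (fun z => rsum (zrange K) (fun y =>
        indP (caseP N E2 sg x z y) * F (E2 x z y))))).
    2: { intros x _. apply rsum_swap. }
    apply (case_bound N M K a lam E2 sg a1 a3 a2); auto.
    - intros. unfold E2. rewrite Z3norm_sq. ring.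
    - intros. unfold E2, a. rewrite om_coord. f_equal; f_equal; ring. }
  assert (C1 : forall sg, (sg = 1 \/ sg = -1)%Z -> rsum3 K (fun n => indP (c1 sg n) * F n) <= B).
  { intros sg Hsg. unfold rsum3. simpl c1.
    rewrite rsum_swap.
    rewrite (rsum_ext _ _ (fun y => rsum (zrange K) (fun z => rsum (zrange K) (fun x =>
        indP (caseP N E1 sg y z x) * F (E1 y z x))))).
    2: { intros y _. apply rsum_swap. }
    apply (case_bound N M K a lam E1 sg a2 a3 a1); auto.
    - intros. unfold E1. rewrite Z3norm_sq. ring.
    - intros. unfold E1, a. rewrite om_coord. f_equal; f_equal; ring. }
  pose proof (C3 1%Z ltac:(lia)). pose proof (C3 (-1)%Z ltac:(lia)).
  pose proof (C2 1%Z ltac:(lia)). pose proof (C2 (-1)%Z ltac:(lia)).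
  pose proof (C1 1%Z ltac:(lia)). pose proof (C1 (-1)%Z ltac:(lia)). lra.
Qed.

Definition Ccont (f : R -> C) (x : R) : Prop :=
  continuous (fun s => fst (f s)) x /\ continuous (fun s => snd (f s)) x.

Lemma normC (z : C) : @norm _ C_R_NormedModule z = Cmod z.
Proof. unfold norm. simpl. unfold prod_norm. simpl. unfold Cmod. f_equal.
  unfold norm; simpl. unfold abs; simpl. rewrite !Rmult_1_r. rewrite <- !Rabs_mult, !Rabs_right by nra. reflexivity. Qed.

Lemma rcont_minus (f g : R -> R) x : continuous f x -> continuous g x -> continuous (fun s => f s - g s) x.
Proof. intros. apply (continuous_plus f (fun s => - g s)); auto. apply (continuous_opp g); auto. Qed.
Lemma rcont_plus (f g : R -> R) x : continuous f x -> continuous g x -> continuous (fun s => f s + g s) x.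
Proof. intros. apply (continuous_plus f g); auto. Qed.
Lemma rcont_mult (f g : R -> R) x : continuous f x -> continuous g x -> continuous (fun s => f s * g s) x.
Proof. intros. apply (continuous_mult f g); auto. Qed.
Lemma rcont_const c x : continuous (T := R_UniformSpace) (U := R_UniformSpace) (fun _ : R => c) x.
Proof. apply continuous_const. Qed.
Lemma rcont_id x : continuous (T := R_UniformSpace) (U := R_UniformSpace) (fun s : R => s) x.
Proof. apply continuous_id. Qed.

Lemma Ccont_mult f g x : Ccont f x -> Ccont g x -> Ccont (fun s => Cmult (f s) (g s)) x.
Proof. intros [f1 f2] [g1 g2]. split; simpl.
  - apply rcont_minus; apply rcont_mult; auto.
  - apply rcont_plus; apply rcont_mult; auto. Qed.
Lemma Ccont_plus f g x : Ccont f x -> Ccont g x -> Ccont (fun s => Cplus (f s) (g s)) x.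
Proof. intros [f1 f2] [g1 g2]. split; simpl; apply rcont_plus; auto. Qed.
Lemma Ccont_RtoC (r : R -> R) x : continuous r x -> Ccont (fun s => RtoC (r s)) x.
Proof. intros H. split; simpl; auto. apply rcont_const. Qed.
Lemma Ccont_cexpi c mu x : Ccont (fun s => cexpi (c + mu * s)) x.
Proof. split; simpl.
  - apply continuous_cos_comp. apply rcont_plus. apply rcont_const. apply rcont_mult. apply rcont_const. apply rcont_id.
  - apply continuous_sin_comp. apply rcont_plus. apply rcont_const. apply rcont_mult. apply rcont_const. apply rcont_id. Qed.
Lemma Ccont_comp (f : R -> C) (g : R -> R) x : continuous g x -> Ccont f (g x) -> Ccont (fun s => f (g s)) x.
Proof. intros Hg [H1 H2]. split.
  - apply (continuous_comp g (fun y => fst (f y))); auto.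
  - apply (continuous_comp g (fun y => snd (f y))); auto. Qed.

Lemma ex_RInt_Ccont (f : R -> C) a b : (forall x, Rmin a b <= x <= Rmax a b -> Ccont f x) ->
  ex_RInt (V := C_R_NormedModule) f a b.
Proof. intros H.
  assert (E1 : ex_RInt (fun s => fst (f s)) a b) by (apply (ex_RInt_continuous (V := R_CompleteNormedModule)); intros; apply H; auto).
  assert (E2 : ex_RInt (fun s => snd (f s)) a b) by (apply (ex_RInt_continuous (V := R_CompleteNormedModule)); intros; apply H; auto).
  destruct E1 as [l1 E1]. destruct E2 as [l2 E2]. exists (l1, l2).
  apply (is_RInt_fct_extend_pair (U := R_NormedModule) (V := R_NormedModule)); auto. Qed.

Lemma Ccont_of_derive (F : R -> C) x d : is_derive (K := R_AbsRing) (V := C_R_NormedModule) F x d -> Ccont F x.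
Proof. intros H. assert (Hc : continuous (T := R_UniformSpace) (U := C_R_NormedModule) F x).
  { apply ex_derive_continuous. exists d. exact H. }
  split.
  - apply (continuous_comp F fst); auto. rewrite (surjective_pairing (F x)). apply continuous_fst.
  - apply (continuous_comp F snd); auto. rewrite (surjective_pairing (F x)). apply continuous_snd. Qed.

Lemma is_derive_fst (F : R -> C) x d : is_derive (K := R_AbsRing) (V := C_R_NormedModule) F x d ->
  is_derive (fun s => fst (F s)) x (fst d).
Proof. intros H. unfold is_derive in *.
  apply (filterdiff_comp F (fun z : C_R_NormedModule => fst z) (fun y => scal y d) (fun z : C_R_NormedModule => fst z) H).
  apply filterdiff_linear. apply (is_linear_fst (U := R_NormedModule) (V := R_NormedModule)). Qed.
Lemma is_derive_snd (F : R -> C) x d : is_derive (K := R_AbsRing) (V := C_R_NormedModule) F x d ->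
  is_derive (fun s => snd (F s)) x (snd d).
Proof. intros H. unfold is_derive in *.
  apply (filterdiff_comp F (fun z : C_R_NormedModule => snd z) (fun y => scal y d) (fun z : C_R_NormedModule => snd z) H).
  apply filterdiff_linear. apply (is_linear_snd (U := R_NormedModule) (V := R_NormedModule)). Qed.

Notation CV := C_R_CompleteNormedModule.

Lemma Cmod_le_comp (z : C) : Cmod z <= Rabs (fst z) + Rabs (snd z).
Proof. unfold Cmod. rewrite <- (sqrt_pow2 (Rabs (fst z) + Rabs (snd z))) by (pose proof (Rabs_pos (fst z)); pose proof (Rabs_pos (snd z)); lra).
  apply sqrt_le_1_alt. pose proof (Rabs_pos (fst z)); pose proof (Rabs_pos (snd z)).
  rewrite <- (pow2_abs (fst z)), <- (pow2_abs (snd z)). nra. Qed.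
Lemma comp_le_Cmod1 (z : C) : Rabs (fst z) <= Cmod z.
Proof. unfold Cmod. rewrite <- (sqrt_pow2 (Rabs (fst z))) by apply Rabs_pos. apply sqrt_le_1_alt.
  rewrite <- (pow2_abs (fst z)). pose proof (pow2_ge_0 (snd z)). lra. Qed.
Lemma comp_le_Cmod2 (z : C) : Rabs (snd z) <= Cmod z.
Proof. unfold Cmod. rewrite <- (sqrt_pow2 (Rabs (snd z))) by apply Rabs_pos. apply sqrt_le_1_alt.
  rewrite <- (pow2_abs (snd z)). pose proof (pow2_ge_0 (fst z)). lra. Qed.

Lemma Cmod_cexpi th : Cmod (cexpi th) = 1.
Proof. unfold Cmod, cexpi. simpl fst; simpl snd. rewrite <- sqrt_1. f_equal. rewrite <- (sin2_cos2 th). unfold Rsqr. ring. Qed.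

Section Lip.
Variables (F : R -> C) (al be L : R).
Hypothesis Hd : forall s, al <= s <= be -> exists d, is_derive (K := R_AbsRing) (V := C_R_NormedModule) F s d /\ Cmod d <= L.

Definition dF (s : R) : C :=
  match excluded_middle_informative (exists d, is_derive (K := R_AbsRing) (V := C_R_NormedModule) F s d /\ Cmod d <= L) with
  | left e => proj1_sig (constructive_indefinite_description _ e)
  | right _ => 0%C end.

Lemma dF_spec s : al <= s <= be -> is_derive (K := R_AbsRing) (V := C_R_NormedModule) F s (dF s) /\ Cmod (dF s) <= L.
Proof. intros Hs. unfold dF. destruct excluded_middle_informative as [e|n].
  - exact (proj2_sig (constructive_indefinite_description _ e)).
  - exfalso. apply n. apply Hd; auto. Qed.

Lemma lip_comp (proj : C -> R) (Hp : forall s, al <= s <= be -> is_derive (fun u => proj (F u)) s (proj (dF s)))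
  (Hb : forall z, Rabs (proj z) <= Cmod z) :
  forall x y, al <= x <= be -> al <= y <= be -> Rabs (proj (F y) - proj (F x)) <= L * Rabs (y - x).
Proof. intros x y Hx Hy.
  destruct (MVT_gen (fun u => proj (F u)) x y (fun s => proj (dF s))) as [c [Hc E]].
  - intros z Hz. apply Hp. split; [apply Rle_trans with (Rmin x y)| apply Rle_trans with (Rmax x y)];
      try lra; [apply Rmin_glb| apply Rmax_lub]; lra.
  - intros z Hz. apply continuity_pt_filterlim. apply (ex_derive_continuous (K := R_AbsRing) (V := R_NormedModule)).
    exists (proj (dF z)). apply Hp. split; [apply Rle_trans with (Rmin x y)| apply Rle_trans with (Rmax x y)];
      try lra; [apply Rmin_glb| apply Rmax_lub]; lra.
  - rewrite E, Rabs_mult. apply Rmult_le_compat_r; [apply Rabs_pos|].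
    eapply Rle_trans; [apply Hb|]. apply dF_spec.
    split; [apply Rle_trans with (Rmin x y)| apply Rle_trans with (Rmax x y)];
      try lra; [apply Rmin_glb| apply Rmax_lub]; lra. Qed.

Lemma lipC x y : al <= x <= be -> al <= y <= be -> Cmod (F y - F x)%C <= 2 * L * Rabs (y - x).
Proof. intros Hx Hy. eapply Rle_trans; [apply Cmod_le_comp|]. simpl.
  pose proof (lip_comp fst (fun s Hs => is_derive_fst F s _ (proj1 (dF_spec s Hs))) comp_le_Cmod1 x y Hx Hy).
  pose proof (lip_comp snd (fun s Hs => is_derive_snd F s _ (proj1 (dF_spec s Hs))) comp_le_Cmod2 x y Hx Hy).
  replace (fst (F y) + - fst (F x)) with (fst (F y) - fst (F x)) by ring.
  replace (snd (F y) + - snd (F x)) with (snd (F y) - snd (F x)) by ring. lra. Qed.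
End Lip.

Definition clamp (al be s : R) : R := (al + be) / 2 + (Rabs (s - al) - Rabs (s - be)) / 2.

Lemma clamp_in al be s : al <= be -> al <= clamp al be s <= be.
Proof. intros H. unfold clamp. destruct (Rle_dec s al); [|destruct (Rle_dec s be)].
  - rewrite (Rabs_left1 (s - al)), (Rabs_left1 (s - be)) by lra. lra.
  - rewrite (Rabs_right (s - al)), (Rabs_left1 (s - be)) by lra. lra.
  - rewrite (Rabs_right (s - al)), (Rabs_right (s - be)) by lra. lra. Qed.
Lemma clamp_id al be s : al <= s <= be -> clamp al be s = s.
Proof. intros H. unfold clamp. rewrite (Rabs_right (s - al)), (Rabs_left1 (s - be)) by lra. field. Qed.
Lemma clamp_lip al be s s' : al <= be -> Rabs (clamp al be s - clamp al be s') <= Rabs (s - s').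
Proof. intros H. unfold clamp.
  destruct (Rle_dec s al); [|destruct (Rle_dec s be)];
  (destruct (Rle_dec s' al); [|destruct (Rle_dec s' be)]);
  repeat first [rewrite (Rabs_left1 (s - al)) by lra | rewrite (Rabs_right (s - al)) by lra
    | rewrite (Rabs_left1 (s - be)) by lra | rewrite (Rabs_right (s - be)) by lra
    | rewrite (Rabs_left1 (s' - al)) by lra | rewrite (Rabs_right (s' - al)) by lra
    | rewrite (Rabs_left1 (s' - be)) by lra | rewrite (Rabs_right (s' - be)) by lra];
  unfold Rabs; repeat destruct Rcase_abs; lra. Qed.
Lemma clamp_cont al be x : continuous (T := R_UniformSpace) (U := R_UniformSpace) (clamp al be) x.
Proof. unfold clamp. apply rcont_plus. apply rcont_const.
  apply (rcont_mult (fun s => Rabs (s - al) - Rabs (s - be)) (fun _ => / 2)); [|apply rcont_const].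
  apply rcont_minus; apply continuous_Rabs_comp; apply rcont_minus; try apply rcont_id; apply rcont_const. Qed.

Lemma cexpi_pi th : cexpi (th + PI) = Copp (cexpi th).
Proof. unfold cexpi. rewrite neg_cos, neg_sin. reflexivity. Qed.

Lemma ex_RInt_gen (f : R -> C) a b : (forall x, Ccont f x) -> ex_RInt (V := C_R_NormedModule) f a b.
Proof. intros H. apply ex_RInt_Ccont. intros; apply H. Qed.

Lemma normC_RInt_abs (f : R -> C) a b M : (forall x, Rmin a b <= x <= Rmax a b -> Cmod (f x) <= M) ->
  (forall x, Ccont f x) -> Cmod (RInt (V := CV) f a b) <= Rabs (b - a) * M.
Proof. intros H Hc. rewrite <- normC. apply (norm_RInt_le_const_abs (V := C_R_NormedModule) f a b).
  - intros; rewrite normC; auto.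
  - apply (RInt_correct (V := CV)). apply ex_RInt_gen; auto. Qed.

Section Osc.
Variables (F : R -> C) (al be L M c mu : R).
Hypothesis Hab : al <= be.
Hypothesis Hd : forall s, al <= s <= be -> exists d, is_derive (K := R_AbsRing) (V := C_R_NormedModule) F s d /\ Cmod d <= L.
Hypothesis HM : forall s, al <= s <= be -> Cmod (F s) <= M.

Let Ft (s : R) : C := F (clamp al be s).

Lemma Ft_cont x : Ccont Ft x.
Proof. unfold Ft. apply Ccont_comp. apply clamp_cont.
  destruct (Hd (clamp al be x) (clamp_in al be x Hab)) as [d [Hd1 _]]. eapply Ccont_of_derive; eauto. Qed.
Lemma Ft_bound x : Cmod (Ft x) <= M.
Proof. apply HM, clamp_in; auto. Qed.
Lemma Ft_lip x y : Cmod (Ft y - Ft x)%C <= 2 * L * Rabs (y - x).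
Proof. unfold Ft. eapply Rle_trans. apply (lipC F al be L Hd); apply clamp_in; auto.
  assert (0 <= L). { destruct (Hd al) as [d [_ Hd2]]; [lra|]. pose proof (Cmod_ge_0 d). lra. }
  apply Rmult_le_compat_l; [lra|]. apply clamp_lip; auto. Qed.

Lemma osc_triv : Cmod (RInt (V := CV) (fun s => Cmult (cexpi (c + mu * s)) (F s)) al be) <= (be - al) * M.
Proof.
  rewrite (RInt_ext (V := CV) _ (fun s => Cmult (cexpi (c + mu * s)) (Ft s))).
  2: { intros x Hx. unfold Ft. rewrite clamp_id; auto. rewrite Rmin_left, Rmax_right in Hx; lra. }
  replace (be - al) with (Rabs (be - al)) by (rewrite Rabs_right; lra).
  apply normC_RInt_abs.
  - intros. rewrite Cmod_mult, Cmod_cexpi. pose proof (Ft_bound x). lra.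
  - intros. apply Ccont_mult. apply Ccont_cexpi. apply Ft_cont. Qed.

Lemma osc_main : mu <> 0 ->
  Cmod (RInt (V := CV) (fun s => Cmult (cexpi (c + mu * s)) (F s)) al be)
   <= (PI / Rabs mu) * (2 * L * (be - al) + 2 * M) / 2.
Proof. intros Hmu.
  set (h := PI / mu).
  set (G := fun s => Cmult (cexpi (c + mu * s)) (Ft s)).
  set (G2 := fun s => Cmult (cexpi (c + mu * s)) (Ft (s + h))).
  assert (HG : forall x, Ccont G x) by (intros; apply Ccont_mult; [apply Ccont_cexpi| apply Ft_cont]).
  assert (HG2 : forall x, Ccont G2 x).
  { intros; apply Ccont_mult; [apply Ccont_cexpi|]. apply (Ccont_comp Ft (fun s => s + h)).
    apply rcont_plus; [apply rcont_id| apply rcont_const]. apply Ft_cont. }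
  rewrite (RInt_ext (V := CV) _ G).
  2: { intros x Hx. unfold G, Ft. rewrite clamp_id; auto. rewrite Rmin_left, Rmax_right in Hx; lra. }
  set (I := RInt (V := CV) G al be).
  assert (Hsub : I = opp (RInt (V := CV) G2 (al - h) (be - h))).
  { assert (HI : is_RInt (V := C_R_NormedModule) G (1 * (al - h) + h) (1 * (be - h) + h) I).
    { replace (1 * (al - h) + h) with al by ring. replace (1 * (be - h) + h) with be by ring.
      apply (RInt_correct (V := CV)). apply ex_RInt_gen; auto. }
    apply is_RInt_comp_lin in HI.
    rewrite <- (RInt_opp (V := CV)) by (apply ex_RInt_gen; auto).
    symmetry. apply (is_RInt_unique (V := CV)).
    eapply is_RInt_ext; [|exact HI]. intros x _. unfold G, G2.
    replace (c + mu * (1 * x + h)) with (c + mu * x + PI) by (unfold h; field; auto).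
    rewrite cexpi_pi. replace (1 * x + h) with (x + h) by ring.
    change (opp (Cmult (cexpi (c + mu * x)) (Ft (x + h)))) with (Copp (Cmult (cexpi (c + mu * x)) (Ft (x + h)))).
    apply injective_projections; simpl; unfold scal; simpl; unfold mult; simpl; ring. }
  set (P := RInt (V := CV) G2 (al - h) al).
  set (Q := RInt (V := CV) G2 al be).
  set (Rr := RInt (V := CV) G2 be (be - h)).
  assert (HPQR : RInt (V := CV) G2 (al - h) (be - h) = plus (plus P Q) Rr).
  { unfold P, Q, Rr. rewrite (RInt_Chasles (V := CV) G2 (al - h) al be) by (apply ex_RInt_gen; auto).
    rewrite (RInt_Chasles (V := CV) G2 (al - h) be (be - h)) by (apply ex_RInt_gen; auto). reflexivity. }
  set (D := RInt (V := CV) (fun s => minus (G s) (G2 s)) al be).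
  assert (HD : D = minus I Q).
  { unfold D, I, Q. apply (RInt_minus (V := CV)); apply ex_RInt_gen; auto. }
  assert (H2I : (I + I)%C = plus (plus D (opp P)) (opp Rr)).
  { rewrite HD. change (I + I)%C with (plus I I). rewrite Hsub at 2. rewrite HPQR.
    unfold minus. apply injective_projections; simpl; unfold plus, opp; simpl; ring. }
  assert (Habs_h : Rabs h = PI / Rabs mu).
  { unfold h. unfold Rdiv. rewrite Rabs_mult, Rabs_inv. rewrite (Rabs_right PI) by (pose proof PI_RGT_0; lra). reflexivity. }
  assert (HL0 : 0 <= L). { destruct (Hd al) as [d [_ Hd2]]; [lra|]. pose proof (Cmod_ge_0 d). lra. }
  assert (ND : Cmod D <= Rabs (be - al) * (2 * L * Rabs h)).
  { apply normC_RInt_abs.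
    - intros x Hx. unfold G, G2. unfold minus. change (plus ?a (opp ?b)) with (Cplus a (Copp b)).
      replace (Cplus (Cmult (cexpi (c + mu * x)) (Ft x)) (Copp (Cmult (cexpi (c + mu * x)) (Ft (x + h)))))
        with (Cmult (cexpi (c + mu * x)) (Cminus (Ft x) (Ft (x + h)))) by (apply injective_projections; simpl; ring).
      rewrite Cmod_mult, Cmod_cexpi, Rmult_1_l. eapply Rle_trans. apply Ft_lip.
      replace (x - (x + h)) with (- h) by ring. rewrite Rabs_Ropp. lra.
    - intros x. unfold minus. apply (Ccont_plus (fun s => G s) (fun s => opp (G2 s))). auto.
      destruct (HG2 x) as [A B]. split; simpl; apply (continuous_opp (K := R_AbsRing) (V := R_NormedModule)); auto. }
  assert (NP : Cmod P <= Rabs (al - (al - h)) * M).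
  { apply normC_RInt_abs; auto. intros. unfold G2. rewrite Cmod_mult, Cmod_cexpi, Rmult_1_l. apply Ft_bound. }
  assert (NR : Cmod Rr <= Rabs (be - h - be) * M).
  { apply normC_RInt_abs; auto. intros. unfold G2. rewrite Cmod_mult, Cmod_cexpi, Rmult_1_l. apply Ft_bound. }
  replace (al - (al - h)) with h in NP by ring. replace (be - h - be) with (- h) in NR by ring. rewrite Rabs_Ropp in NR.
  assert (Cmod (I + I)%C <= Cmod D + Cmod P + Cmod Rr).
  { rewrite H2I. change (plus (plus D (opp P)) (opp Rr)) with (Cplus (Cplus D (Copp P)) (Copp Rr)).
    eapply Rle_trans; [apply Cmod_triangle|]. rewrite Cmod_opp.
    eapply Rle_trans; [apply Rplus_le_compat_r; apply Cmod_triangle|]. rewrite Cmod_opp. lra. }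
  assert (Cmod (I + I)%C = 2 * Cmod I).
  { replace (I + I)%C with (Cmult (RtoC 2) I) by (apply injective_projections; simpl; ring).
    rewrite Cmod_mult, Cmod_R, Rabs_right; lra. }
  rewrite Rabs_right in ND by lra. rewrite <- Habs_h.
  assert (0 <= Rabs h) by apply Rabs_pos. nra.
Qed.
End Osc.

Lemma interval_ends (J : R -> Prop) t : is_interval J -> 0 <= t ->
  exists al be, 0 <= al <= be /\ be <= t /\
   forall s, 0 < s < t -> (al < s < be -> J s) /\ (J s -> al <= s <= be).
Proof. intros HJ Ht.
  destruct (classic (exists s, 0 < s < t /\ J s)) as [[s0 [Hs0 Js0]]|Hno].
  2: { exists 0, 0. split; [lra|]. split; [lra|]. intros s Hs. split; [lra|]. intros Js. exfalso. apply Hno. eauto. }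
  set (E := fun s => 0 < s < t /\ J s).
  assert (Hb : bound E) by (exists t; intros x [Hx _]; lra).
  destruct (completeness E Hb (ex_intro _ s0 (conj Hs0 Js0))) as [be [Hub Hlub]].
  set (E' := fun s => E (- s)).
  assert (Hb' : bound E') by (exists 0; intros x [Hx _]; lra).
  assert (HE'0 : E' (- s0)) by (unfold E', E; rewrite Ropp_involutive; split; auto).
  destruct (completeness E' Hb' (ex_intro _ (- s0) HE'0)) as [mal [Hub' Hlub']].
  exists (- mal), be.
  assert (Hbe1 : s0 <= be) by (apply Hub; split; auto).
  assert (Hbe2 : be <= t) by (apply Hlub; intros x [Hx _]; lra).
  assert (Hal1 : - s0 <= mal) by (apply Hub'; unfold E', E; rewrite Ropp_involutive; split; auto).
  assert (Hal2 : mal <= 0) by (apply Hlub'; intros x [Hx _]; lra).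
  split; [lra|]. split; [lra|]. intros s Hs. split.
  - intros [H1 H2].
    assert (exists e1, E e1 /\ e1 <= s) as [e1 [[He1 Je1] Hle1]].
    { apply NNPP. intros Hn. assert (mal <= - s).
      { apply Hlub'. intros x Hx. destruct (Rle_dec x (- s)) as [|Hgt]; auto. exfalso. apply Hn.
        exists (- x). split; [exact Hx| lra]. } lra. }
    assert (exists e2, E e2 /\ s <= e2) as [e2 [[He2 Je2] Hle2]].
    { apply NNPP. intros Hn. assert (be <= s).
      { apply Hlub. intros x Hx. destruct (Rle_dec x s) as [|Hgt]; auto. exfalso. apply Hn.
        exists x. split; [exact Hx| lra]. } lra. }
    apply (HJ e1 s e2); auto.
  - intros Js. split.
    + assert (- s <= mal) by (apply Hub'; unfold E', E; rewrite Ropp_involutive; split; auto). lra.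
    + apply Hub. split; auto. Qed.

Lemma ind_in J s : J s -> indicator J s = 1.
Proof. intros H. unfold indicator. destruct excluded_middle_informative; tauto. Qed.
Lemma ind_out J s : ~ J s -> indicator J s = 0.
Proof. intros H. unfold indicator. destruct excluded_middle_informative; tauto. Qed.

Lemma is_RInt_C0 a b : is_RInt (V := C_R_NormedModule) (fun _ => RtoC 0) a b (RtoC 0).
Proof. pose proof (is_RInt_const (V := C_R_NormedModule) a b (RtoC 0)).
  match type of H with is_RInt _ _ _ ?l => assert (E : l = RtoC 0) end.
  { apply injective_projections; simpl; unfold scal; simpl; unfold mult; simpl; ring. }
  rewrite E in H. exact H. Qed.

Lemma RInt_indicator (J : R -> Prop) t al be (u : R -> R) (w : R -> C) :
  0 <= al <= be -> be <= t ->
  (forall s, 0 < s < t -> (al < s < be -> J s) /\ (J s -> al <= s <= be)) ->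
  ex_RInt (V := C_R_NormedModule) (fun s => Cmult (RtoC (u s)) (w s)) al be ->
  RInt (V := CV) (fun s => Cmult (RtoC (indicator J s * u s)) (w s)) 0 t
  = RInt (V := CV) (fun s => Cmult (RtoC (u s)) (w s)) al be.
Proof. intros Hab Hbt HJ Hex.
  apply (is_RInt_unique (V := CV)).
  set (I := RInt (V := CV) (fun s => Cmult (RtoC (u s)) (w s)) al be).
  assert (HI : is_RInt (V := C_R_NormedModule) (fun s => Cmult (RtoC (u s)) (w s)) al be I) by (apply (RInt_correct (V := CV)); auto).
  assert (Z1 : is_RInt (V := C_R_NormedModule) (fun s => Cmult (RtoC (indicator J s * u s)) (w s)) 0 al (RtoC 0)).
  { assert (K1 := is_RInt_C0 0 al).
    eapply is_RInt_ext; [|exact K1].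
    intros x Hx. rewrite Rmin_left, Rmax_right in Hx by lra. rewrite ind_out.
    - apply injective_projections; simpl; ring.
    - intros Jx. destruct (HJ x) as [_ H]; [lra|]. specialize (H Jx). lra. }
  assert (Z3 : is_RInt (V := C_R_NormedModule) (fun s => Cmult (RtoC (indicator J s * u s)) (w s)) be t (RtoC 0)).
  { assert (K1 := is_RInt_C0 be t).
    eapply is_RInt_ext; [|exact K1].
    intros x Hx. rewrite Rmin_left, Rmax_right in Hx by lra. rewrite ind_out.
    - apply injective_projections; simpl; ring.
    - intros Jx. destruct (HJ x) as [_ H]; [lra|]. specialize (H Jx). lra. }
  assert (Z2 : is_RInt (V := C_R_NormedModule) (fun s => Cmult (RtoC (indicator J s * u s)) (w s)) al be I).
  { eapply is_RInt_ext; [|exact HI]. intros x Hx.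
    destruct (Req_dec al be) as [E|E]. { rewrite E in Hx. rewrite Rmin_left, Rmax_right in Hx; lra. }
    rewrite Rmin_left, Rmax_right in Hx by lra. rewrite ind_in; [f_equal; f_equal; ring|].
    apply (HJ x); lra. }
  pose proof (is_RInt_Chasles _ _ _ _ _ _ (is_RInt_Chasles _ _ _ _ _ _ Z1 Z2) Z3).
  match type of H with is_RInt _ _ _ ?l => assert (E : l = I) end.
  { apply injective_projections; simpl; unfold plus; simpl; ring. }
  rewrite E in H. exact H. Qed.

Lemma RInt_neg_t (J : R -> Prop) t T (u : R -> R) (w : R -> C) :
  (forall x, J x -> 0 <= x <= T) -> t < 0 ->
  RInt (V := CV) (fun s => Cmult (RtoC (indicator J s * u s)) (w s)) 0 t = (RtoC 0).
Proof. intros HJ Ht. apply (is_RInt_unique (V := CV)).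
  assert (K1 := is_RInt_C0 0 t).
  eapply is_RInt_ext; [|exact K1].
  intros x Hx. rewrite Rmin_right, Rmax_left in Hx by lra. rewrite ind_out.
  + apply injective_projections; simpl; ring.
  + intros Jx. specialize (HJ x Jx). lra. Qed.

Lemma trig_id p q psi :
  Cmult (RtoC (sin p * cos q)) (cexpi psi) =
  Cplus (Cplus (Cmult (RtoC (1/4)) (cexpi (psi - (p + q) + PI / 2)))
               (Cmult (RtoC (1/4)) (cexpi (psi + (p + q) - PI / 2))))
        (Cmult (RtoC (1/2)) (Cmult (RtoC (sin (p - q))) (cexpi psi))).
Proof. unfold cexpi.
  rewrite (cos_plus (psi - (p + q))), (sin_plus (psi - (p + q))), (cos_minus (psi + (p + q))), (sin_minus (psi + (p + q))).
  rewrite cos_PI2, sin_PI2.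
  rewrite (cos_minus psi), (sin_minus psi), (cos_plus psi), (sin_plus psi), cos_plus, sin_plus, sin_minus.
  apply injective_projections; simpl; field. Qed.

Lemma Rabs_sin_le x : Rabs (sin x) <= Rabs x.
Proof. destruct (MVT_abs sin cos 0 x) as [c [E _]].
  { intros. apply derivable_pt_lim_sin. }
  rewrite sin_0, !Rminus_0_r in E. rewrite E. pose proof (COS_bound c).
  assert (Rabs (cos c) <= 1) by (unfold Rabs; destruct Rcase_abs; lra).
  pose proof (Rabs_pos x). nra. Qed.

Lemma sin_sum_bound p q : Rabs (sin p + sin q) <= Rabs (p + q).
Proof. assert (E : forall a b, sin (a + b) + sin (a - b) = 2 * (sin a * cos b)) by (intros; rewrite sin_plus, sin_minus; ring).
  specialize (E ((p + q) / 2) ((p - q) / 2)).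
  replace ((p + q) / 2 + (p - q) / 2) with p in E by field. replace ((p + q) / 2 - (p - q) / 2) with q in E by field.
  rewrite E.
  rewrite Rabs_mult, Rabs_mult, (Rabs_right 2) by lra.
  pose proof (Rabs_sin_le ((p + q) / 2)). pose proof (COS_bound ((p - q) / 2)).
  assert (Rabs (cos ((p - q) / 2)) <= 1) by (unfold Rabs; destruct Rcase_abs; lra).
  replace (Rabs (p + q)) with (2 * Rabs ((p + q) / 2)).
  2: { unfold Rdiv. rewrite Rabs_mult. rewrite (Rabs_right (/ 2)) by lra. field. }
  pose proof (Rabs_pos (sin ((p + q) / 2))). pose proof (Rabs_pos (cos ((p - q) / 2))). nra. Qed.

Lemma paral a1 a2 a3 n1 n2 n3 :
  let U := 1 + (a1 + n1) ^ 2 + (a2 + n2) ^ 2 + (a3 + n3) ^ 2 in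
  let U' := 1 + (a1 - n1) ^ 2 + (a2 - n2) ^ 2 + (a3 - n3) ^ 2 in
  let W := 1 + n1 ^ 2 + n2 ^ 2 + n3 ^ 2 in
  let Q := a1 ^ 2 + a2 ^ 2 + a3 ^ 2 in
  Rabs (sqrt U + sqrt U' - 2 * sqrt W) <= Q / sqrt W.
Proof. intros U U' W Q.
  assert (HU : 0 <= U) by (unfold U; pose proof (pow2_ge_0 (a1+n1)); pose proof (pow2_ge_0 (a2+n2)); pose proof (pow2_ge_0 (a3+n3)); lra).
  assert (HU' : 0 <= U') by (unfold U'; pose proof (pow2_ge_0 (a1-n1)); pose proof (pow2_ge_0 (a2-n2)); pose proof (pow2_ge_0 (a3-n3)); lra).
  assert (HW : 1 <= W) by (unfold W; pose proof (pow2_ge_0 n1); pose proof (pow2_ge_0 n2); pose proof (pow2_ge_0 n3); lra).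
  assert (HQ : 0 <= Q) by (unfold Q; pose proof (pow2_ge_0 a1); pose proof (pow2_ge_0 a2); pose proof (pow2_ge_0 a3); lra).
  pose proof (sqrt_sqrt U HU). pose proof (sqrt_sqrt U' HU'). pose proof (sqrt_sqrt W ltac:(lra)).
  pose proof (sqrt_pos U). pose proof (sqrt_pos U'). 
  assert (Hw : 1 <= sqrt W) by (rewrite <- sqrt_1; apply sqrt_le_1_alt; lra).
  assert (Hsum : U + U' = 2 * W + 2 * Q) by (unfold U, U', W, Q; ring).
  assert (HCS : (W - Q) ^ 2 <= U * U').
  { set (x1 := n1 + a1). set (x2 := n2 + a2). set (x3 := n3 + a3).
    set (y1 := n1 - a1). set (y2 := n2 - a2). set (y3 := n3 - a3).
    assert (E : U * U' - (W - Q) ^ 2 = (x1 - y1) ^ 2 + (x2 - y2) ^ 2 + (x3 - y3) ^ 2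
       + (x1 * y2 - x2 * y1) ^ 2 + (x1 * y3 - x3 * y1) ^ 2 + (x2 * y3 - x3 * y2) ^ 2)
      by (unfold U, U', W, Q, x1, x2, x3, y1, y2, y3; ring).
    pose proof (pow2_ge_0 (x1 - y1)). pose proof (pow2_ge_0 (x2 - y2)). pose proof (pow2_ge_0 (x3 - y3)).
    pose proof (pow2_ge_0 (x1 * y2 - x2 * y1)). pose proof (pow2_ge_0 (x1 * y3 - x3 * y1)). pose proof (pow2_ge_0 (x2 * y3 - x3 * y2)).
    lra. }
  assert (Hprod : W - Q <= sqrt U * sqrt U').
  { destruct (Rle_dec (W - Q) 0). { pose proof (Rmult_le_pos _ _ H2 H3). lra. }
    rewrite <- sqrt_mult by auto. rewrite <- (sqrt_pow2 (W - Q)) by lra. apply sqrt_le_1_alt. auto. }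
  assert (Hlow : 2 * sqrt W <= sqrt U + sqrt U').
  { apply Rsqr_incr_0_var; [|nra]. unfold Rsqr. nra. }
  assert (Hup : sqrt U + sqrt U' <= 2 * sqrt W + Q / sqrt W).
  { assert (Q / sqrt W >= 0) by (unfold Rdiv; apply Rle_ge, Rmult_le_pos; [lra| left; apply Rinv_0_lt_compat; lra]).
    apply Rsqr_incr_0_var; [|lra]. unfold Rsqr.
    assert (E : (2 * sqrt W + Q / sqrt W) * (2 * sqrt W + Q / sqrt W) = 4 * (sqrt W * sqrt W) + 4 * Q + (Q / sqrt W) ^ 2)
      by (field; lra).
    rewrite H1 in E.
    rewrite E. pose proof (pow2_ge_0 (sqrt U - sqrt U')). nra. }
  rewrite Rabs_right by lra. lra. Qed.

Lemma normC_RInt_abs' (f : R -> C) a b M : (forall x, Rmin a b <= x <= Rmax a b -> Cmod (f x) <= M) ->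
  (forall x, Rmin a b <= x <= Rmax a b -> Ccont f x) -> Cmod (RInt (V := CV) f a b) <= Rabs (b - a) * M.
Proof. intros H Hc. rewrite <- normC. apply (norm_RInt_le_const_abs (V := C_R_NormedModule) f a b).
  - intros; rewrite normC; auto.
  - apply (RInt_correct (V := CV)). apply ex_RInt_Ccont; auto. Qed.

Lemma Ccont_cexpi_lin lam x : Ccont (fun s => cexpi (lam * s)) x.
Proof. split; simpl.
  - apply continuous_cos_comp. apply rcont_mult. apply rcont_const. apply rcont_id.
  - apply continuous_sin_comp. apply rcont_mult. apply rcont_const. apply rcont_id. Qed.

Lemma jbr_opp n : jbr (Z3opp n) = jbr n.
Proof. destruct n as [[x y] z]. simpl. rewrite !jbr_coord, !opp_IZR. f_equal. ring. Qed.

Section PerN.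
Variables (f : R -> R -> Z3 -> C) (a : Z3) (J : R -> Prop) (T A lam t al be : R).
Hypothesis HT : 1 <= T.
Hypothesis Ht : 0 <= t <= T.
Hypothesis Hab : 0 <= al <= be.
Hypothesis Hbt : be <= t.
Hypothesis HJ : forall s, 0 < s < t -> (al < s < be -> J s) /\ (J s -> al <= s <= be).
Hypothesis Hf1 : forall t t' n, Rabs t <= T -> Rabs t' <= T -> Cmod (f t t' n) <= A * / jbr n ^ 3.
Hypothesis Hf2 : forall t t' n, Rabs t <= T -> Rabs t' <= T ->
       Cmod (Cminus (f t t' n) (f t t' (Z3opp n))) <= A * / jbr n ^ 4.
Hypothesis Hf3 : forall t t' n, Rabs t <= T -> Rabs t' <= T ->
       exists d : C, is_derive (K := R_AbsRing) (V := C_R_NormedModule) (fun s => f t s n) t' d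
         /\ Cmod d <= A * / jbr n ^ 4.

Definition uu n := jbr (Z3add a n).
Definition op n := uu n + jbr n.
Definition h1 n s := Cmult (cexpi ((PI / 2 - t * op n) + (lam + op n) * s)) (f t s n).
Definition h2 n s := Cmult (cexpi ((t * op n - PI / 2) + (lam - op n) * s)) (f t s n).
Definition h3 n s := Cmult (RtoC (sin ((t - s) * (uu n - jbr n)))) (Cmult (cexpi (lam * s)) (f t s n)).
Definition I1 n := RInt (V := CV) (h1 n) al be.
Definition I2 n := RInt (V := CV) (h2 n) al be.
Definition I3 n := RInt (V := CV) (h3 n) al be.

Lemma in_T s : Rmin al be <= s <= Rmax al be -> Rabs s <= T /\ al <= s <= be.
Proof. intros Hs. rewrite Rmin_left, Rmax_right in Hs by lra. split; [|lra]. rewrite Rabs_right; lra. Qed.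
Lemma absT : Rabs t <= T.
Proof. rewrite Rabs_right; lra. Qed.

Lemma Fcont n s : Rmin al be <= s <= Rmax al be -> Ccont (fun s => f t s n) s.
Proof. intros Hs. destruct (in_T s Hs) as [H1 _]. destruct (Hf3 t s n absT H1) as [d [Hd _]].
  eapply Ccont_of_derive; eauto. Qed.

Lemma ex1 n : ex_RInt (V := C_R_NormedModule) (h1 n) al be.
Proof. apply ex_RInt_Ccont. intros. unfold h1. apply Ccont_mult. apply Ccont_cexpi. apply Fcont; auto. Qed.
Lemma ex2 n : ex_RInt (V := C_R_NormedModule) (h2 n) al be.
Proof. apply ex_RInt_Ccont. intros. unfold h2. apply Ccont_mult. apply Ccont_cexpi. apply Fcont; auto. Qed.
Lemma cont3 n x : Rmin al be <= x <= Rmax al be -> Ccont (h3 n) x.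
Proof. intros. unfold h3. apply Ccont_mult. apply Ccont_RtoC. apply continuous_sin_comp.
  apply rcont_mult; [|apply rcont_const]. apply rcont_minus; [apply rcont_const| apply rcont_id].
  apply Ccont_mult. apply Ccont_cexpi_lin. apply Fcont; auto. Qed.
Lemma ex3 n : ex_RInt (V := C_R_NormedModule) (h3 n) al be.
Proof. apply ex_RInt_Ccont. intros. apply cont3; auto. Qed.

Lemma decomp n : RInt (V := CV) (integrand f a J lam t n) 0 t =
  Cplus (Cplus (Cmult (RtoC (1/4)) (I1 n)) (Cmult (RtoC (1/4)) (I2 n))) (Cmult (RtoC (1/2)) (I3 n)).
Proof.
  unfold integrand.
  rewrite (RInt_ext (V := CV) _ (fun s => Cmult (RtoC (indicator J s * (sin ((t - s) * jbr (Z3add a n)) * cos ((t - s) * jbr n))))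
       (Cmult (cexpi (lam * s)) (f t s n)))) by (intros; f_equal; f_equal; ring).
  rewrite (RInt_indicator J t al be (fun s => sin ((t - s) * jbr (Z3add a n)) * cos ((t - s) * jbr n))
             (fun s => Cmult (cexpi (lam * s)) (f t s n))); auto.
  2: { apply ex_RInt_Ccont. intros. apply Ccont_mult. apply Ccont_RtoC.
       apply rcont_mult; apply continuous_sin_comp || apply continuous_cos_comp;
       (apply rcont_mult; [|apply rcont_const]); apply rcont_minus; [apply rcont_const| apply rcont_id| apply rcont_const| apply rcont_id].
       apply Ccont_mult. apply Ccont_cexpi_lin. apply Fcont; auto. }
  apply (is_RInt_unique (V := CV)).
  pose proof (is_RInt_plus _ _ _ _ _ _ (is_RInt_plus _ _ _ _ _ _
     (is_RInt_scal _ _ _ (1/4) _ (RInt_correct (V := CV) _ _ _ (ex1 n)))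
     (is_RInt_scal _ _ _ (1/4) _ (RInt_correct (V := CV) _ _ _ (ex2 n))))
     (is_RInt_scal _ _ _ (1/2) _ (RInt_correct (V := CV) _ _ _ (ex3 n)))) as K.
  match type of K with is_RInt _ _ _ ?l => assert (E : l = Cplus (Cplus (Cmult (RtoC (1/4)) (I1 n)) (Cmult (RtoC (1/4)) (I2 n))) (Cmult (RtoC (1/2)) (I3 n))) end.
  { unfold I1, I2, I3. apply injective_projections; simpl; unfold scal; simpl; unfold mult, plus; simpl; ring. }
  rewrite E in K. eapply is_RInt_ext; [|exact K]. intros s _.
  unfold h1, h2, h3.
  replace (PI / 2 - t * op n + (lam + op n) * s) with (lam * s - ((t - s) * uu n + (t - s) * jbr n) + PI / 2) by (unfold op; ring).
  replace (t * op n - PI / 2 + (lam - op n) * s) with (lam * s + ((t - s) * uu n + (t - s) * jbr n) - PI / 2) by (unfold op; ring).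
  replace ((t - s) * (uu n - jbr n)) with ((t - s) * uu n - (t - s) * jbr n) by ring.
  unfold uu. rewrite (Cmult_assoc (RtoC (sin ((t - s) * jbr (Z3add a n)) * cos ((t - s) * jbr n))) (cexpi (lam * s)) (f t s n)). rewrite trig_id.
  apply injective_projections; simpl; unfold scal; simpl; unfold mult, plus; simpl; ring.
Qed.

Lemma hi_bound n c mu :
  Cmod (RInt (V := CV) (fun s => Cmult (cexpi (c + mu * s)) (f t s n)) al be)
   <= 2 * PI * T * (A * / jbr n ^ 3 + A * / jbr n ^ 4) * mn mu.
Proof.
  assert (Hd : forall s, al <= s <= be -> exists d, is_derive (K := R_AbsRing) (V := C_R_NormedModule) (fun s => f t s n) s d /\ Cmod d <= A * / jbr n ^ 4).
  { intros s Hs. apply Hf3. apply absT. rewrite Rabs_right; lra. }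
  assert (HM : forall s, al <= s <= be -> Cmod (f t s n) <= A * / jbr n ^ 3).
  { intros s Hs. apply Hf1. apply absT. rewrite Rabs_right; lra. }
  assert (HL0 : 0 <= A * / jbr n ^ 4). { destruct (Hd al) as [d [_ H]]; [lra|]. pose proof (Cmod_ge_0 d). lra. }
  assert (HM0 : 0 <= A * / jbr n ^ 3). { pose proof (HM al ltac:(lra)). pose proof (Cmod_ge_0 (f t al n)). lra. }
  pose proof PI_RGT_0. pose proof PI_4. pose proof PI2_1.
  set (L := A * / jbr n ^ 4) in *. set (M := A * / jbr n ^ 3) in *.
  assert (be - al <= T) by lra.
  assert (HTML : (be - al) * L + M <= T * (M + L)).
  { assert ((be - al) * L <= T * L) by (apply Rmult_le_compat_r; lra). nra. }
  assert (0 <= T * (M + L)) by (apply Rmult_le_pos; lra).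
  unfold mn. destruct Rle_dec as [Hle|Hgt].
  - eapply Rle_trans. apply (osc_triv (fun s => f t s n) al be L M c mu); auto. lra.
    apply Rle_trans with (T * (M + L)). { apply Rmult_le_compat; lra. }
    replace (2 * PI * T * (M + L) * 1) with ((2 * PI) * (T * (M + L))) by ring. nra.
  - assert (Hmu : mu <> 0) by (intro E; subst; rewrite Rabs_R0 in Hgt; lra).
    eapply Rle_trans. apply (osc_main (fun s => f t s n) al be L M c mu); auto. lra.
    assert (0 < Rabs mu) by lra.
    assert (Hi : 0 < / Rabs mu) by (apply Rinv_0_lt_compat; lra).
    replace (PI / Rabs mu * (2 * L * (be - al) + 2 * M) / 2) with ((PI * / Rabs mu) * ((be - al) * L + M)) by (field; lra).
    replace (2 * PI * T * (M + L) * / Rabs mu) with ((PI * / Rabs mu) * (2 * (T * (M + L)))) by ring.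
    apply Rmult_le_compat_l. apply Rmult_le_pos; lra. lra.
Qed.

Lemma uu_paral n : Rabs (uu n + uu (Z3opp n) - 2 * jbr n) <= Z3norm a ^ 2 / jbr n.
Proof. unfold uu. destruct a as [[a1 a2] a3]. destruct n as [[n1 n2] n3]. simpl Z3opp. simpl Z3add.
  rewrite !jbr_coord, Z3norm_sq, !plus_IZR, !opp_IZR.
  pose proof (paral (IZR a1) (IZR a2) (IZR a3) (IZR n1) (IZR n2) (IZR n3)). simpl in H.
  replace (1 + (IZR a1 + - IZR n1) ^ 2 + (IZR a2 + - IZR n2) ^ 2 + (IZR a3 + - IZR n3) ^ 2)
    with (1 + (IZR a1 - IZR n1) ^ 2 + (IZR a2 - IZR n2) ^ 2 + (IZR a3 - IZR n3) ^ 2) by ring.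
  exact H. Qed.

Lemma jbr_pos n : 1 <= jbr n.
Proof. unfold jbr. apply Rle_trans with (sqrt 1); [rewrite sqrt_1; lra|]. apply sqrt_le_1_alt. pose proof (pow2_ge_0 (Z3norm n)). lra. Qed.

Lemma lo_pair n : Cmod (Cplus (I3 n) (I3 (Z3opp n)))
   <= T * (A * / jbr n ^ 4 + T * (Z3norm a ^ 2 / jbr n) * (A * / jbr n ^ 3)).
Proof.
  assert (E : Cplus (I3 n) (I3 (Z3opp n)) = RInt (V := CV) (fun s => Cplus (h3 n s) (h3 (Z3opp n) s)) al be).
  { unfold I3. symmetry. apply (RInt_plus (V := CV)); apply ex3. }
  rewrite E. set (B := A * / jbr n ^ 4 + T * (Z3norm a ^ 2 / jbr n) * (A * / jbr n ^ 3)).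
  assert (HB : forall x, Rmin al be <= x <= Rmax al be -> Cmod (Cplus (h3 n x) (h3 (Z3opp n) x)) <= B).
  { intros s Hs. destruct (in_T s Hs) as [HsT Hs'].
    unfold h3. set (x := t - s). set (d1 := uu n - jbr n). set (d2 := uu (Z3opp n) - jbr (Z3opp n)).
    set (F1 := f t s n). set (F2 := f t s (Z3opp n)).
    replace (Cplus (Cmult (RtoC (sin (x * d1))) (Cmult (cexpi (lam * s)) F1)) (Cmult (RtoC (sin (x * d2))) (Cmult (cexpi (lam * s)) F2)))
      with (Cmult (cexpi (lam * s)) (Cplus (Cmult (RtoC (sin (x * d1))) (Cminus F1 F2)) (Cmult (RtoC (sin (x * d1) + sin (x * d2))) F2)))
      by (apply injective_projections; simpl; ring).
    rewrite Cmod_mult, Cmod_cexpi, Rmult_1_l. eapply Rle_trans; [apply Cmod_triangle|].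
    rewrite !Cmod_mult, !Cmod_R.
    assert (S1 : Rabs (sin (x * d1)) <= 1) by (pose proof (SIN_bound (x * d1)); unfold Rabs; destruct Rcase_abs; lra).
    assert (S2 : Rabs (sin (x * d1) + sin (x * d2)) <= T * (Z3norm a ^ 2 / jbr n)).
    { eapply Rle_trans; [apply sin_sum_bound|]. replace (x * d1 + x * d2) with (x * (uu n + uu (Z3opp n) - 2 * jbr n))
        by (unfold d1, d2; rewrite jbr_opp; ring).
      rewrite Rabs_mult. apply Rmult_le_compat; try apply Rabs_pos. unfold x. rewrite Rabs_right; lra. apply uu_paral. }
    assert (C1 : Cmod (Cminus F1 F2) <= A * / jbr n ^ 4) by (apply Hf2; [apply absT| auto]).
    assert (C2 : Cmod F2 <= A * / jbr n ^ 3) by (unfold F2; rewrite <- (jbr_opp n); apply Hf1; [apply absT| auto]).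
    pose proof (Cmod_ge_0 (Cminus F1 F2)). pose proof (Cmod_ge_0 F2).
    pose proof (Rabs_pos (sin (x * d1))). pose proof (Rabs_pos (sin (x * d1) + sin (x * d2))).
    unfold B. apply Rplus_le_compat.
    - apply Rle_trans with (1 * Cmod (Cminus F1 F2)); [apply Rmult_le_compat_r; lra| lra].
    - apply Rmult_le_compat; auto. }
  eapply Rle_trans. apply normC_RInt_abs'. exact HB.
  { intros. apply Ccont_plus; apply cont3; auto. }
  assert (0 <= B).
  { pose proof (HB al ltac:(rewrite Rmin_left, Rmax_right; lra)). pose proof (Cmod_ge_0 (Cplus (h3 n al) (h3 (Z3opp n) al))). lra. }
  rewrite Rabs_right by lra. apply Rmult_le_compat_r; lra.
Qed.
End PerN.

Lemma sum_box_ext K g h : (forall n, g n = h n) -> sum_box K g = sum_box K h.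
Proof. intros H. unfold sum_box. rewrite !sumZ_csum. apply csum_ext; intros. rewrite !sumZ_csum. apply csum_ext; intros.
  rewrite !sumZ_csum. apply csum_ext; intros. apply H. Qed.
Lemma sum_box_plus K g h : sum_box K (fun n => Cplus (g n) (h n)) = Cplus (sum_box K g) (sum_box K h).
Proof. unfold sum_box. rewrite !sumZ_csum. rewrite <- csum_plus. apply csum_ext; intros.
  rewrite !sumZ_csum. rewrite <- csum_plus. apply csum_ext; intros. rewrite !sumZ_csum. apply csum_plus. Qed.
Lemma sum_box_scal K c g : sum_box K (fun n => Cmult c (g n)) = Cmult c (sum_box K g).
Proof. unfold sum_box. rewrite !sumZ_csum. rewrite <- csum_scal. apply csum_ext; intros.
  rewrite !sumZ_csum. rewrite <- csum_scal. apply csum_ext; intros. rewrite !sumZ_csum. apply csum_scal. Qed.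
Lemma Cmod_sum_box K g : Cmod (sum_box K g) <= rsum3 K (fun n => Cmod (g n)).
Proof. unfold sum_box, rsum3. rewrite !sumZ_csum. eapply Rle_trans; [apply Cmod_csum|].
  apply rsum_le. intros x _. rewrite !sumZ_csum. eapply Rle_trans; [apply Cmod_csum|].
  apply rsum_le. intros y _. rewrite !sumZ_csum. apply Cmod_csum. Qed.
Lemma sum_box_refl K g : sum_box K g = sum_box K (fun n => g (Z3opp n)).
Proof. unfold sum_box. rewrite !sumZ_csum. rewrite csum_refl. apply csum_ext; intros.
  rewrite !sumZ_csum. rewrite csum_refl. apply csum_ext; intros. rewrite !sumZ_csum. rewrite csum_refl. apply csum_ext; intros.
  reflexivity. Qed.
Lemma sum_box_zero K g : (forall n, g n = RtoC 0) -> sum_box K g = RtoC 0.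
Proof. intros H. rewrite (sum_box_ext K g (fun n => Cmult (RtoC 0) (g n))).
  rewrite sum_box_scal. apply injective_projections; simpl; ring.
  intros n. rewrite H. apply injective_projections; simpl; ring. Qed.

Lemma Z3norm_opp n : Z3norm (Z3opp n) = Z3norm n.
Proof. destruct n as [[x y] z]. simpl. rewrite !opp_IZR. f_equal. ring. Qed.

Section Chi.
Variables (rho0 : R -> R) (N : R).
Hypothesis Hrho : truncation_profile rho0.
Hypothesis HN : 1 < N.

Lemma chi_eq n : chiN rho0 N n = rho0 (Z3norm n / N) - rho0 (Z3norm n / (N / 2)).
Proof. unfold chiN. destruct Req_EM_T; [lra|]. reflexivity. Qed.
Lemma chi_bound n : Rabs (chiN rho0 N n) <= 1.
Proof. rewrite chi_eq. destruct Hrho as [_ [H01 _]]. pose proof (H01 (Z3norm n / N)). pose proof (H01 (Z3norm n / (N / 2))).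
  unfold Rabs; destruct Rcase_abs; lra. Qed.
Lemma chi_opp n : chiN rho0 N (Z3opp n) = chiN rho0 N n.
Proof. rewrite !chi_eq, Z3norm_opp. reflexivity. Qed.
Lemma chi_support n : ~ shell N n -> chiN rho0 N n = 0.
Proof. intros Hs. rewrite chi_eq. destruct Hrho as [_ [_ [H1 H2]]]. pose proof (Z3norm_nonneg n).
  unfold shell in Hs.
  assert (A1 : 0 <= Z3norm n / N) by (apply Rdiv_le_0_compat; lra).
  assert (A2 : 0 <= Z3norm n / (N / 2)) by (apply Rdiv_le_0_compat; lra).
  assert (E2 : Z3norm n / (N / 2) = 2 * (Z3norm n / N)) by (field; lra).
  destruct (Rle_dec (Z3norm n) (N / 2)).
  - assert (Z3norm n / N <= 1 / 2).
    { apply (Rmult_le_reg_r N); [lra|]. unfold Rdiv. rewrite Rmult_assoc, Rinv_l by lra. lra. }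
    rewrite (H1 (Z3norm n / N)) by (rewrite Rabs_right; lra).
    rewrite (H1 (Z3norm n / (N / 2))) by (rewrite Rabs_right; lra). ring.
  - assert (2 * N <= Z3norm n) by lra.
    assert (2 <= Z3norm n / N).
    { apply (Rmult_le_reg_r N); [lra|]. unfold Rdiv. rewrite Rmult_assoc, Rinv_l by lra. lra. }
    rewrite (H2 (Z3norm n / N)) by (rewrite Rabs_right; lra).
    rewrite (H2 (Z3norm n / (N / 2))) by (rewrite Rabs_right; lra). ring. Qed.
Lemma chi_le_ind n X : 0 <= X -> Rabs (chiN rho0 N n) * X <= indP (shell N n) * X.
Proof. intros HX. destruct (excluded_middle_informative (shell N n)).
  - rewrite indP_true by auto. pose proof (chi_bound n). nra.
  - rewrite indP_false, chi_support by auto. rewrite Rabs_R0. lra. Qed.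
End Chi.

Lemma inv_pow_le A x y k : 0 <= A -> 0 < x <= y -> A * / y ^ k <= A * / x ^ k.
Proof. intros HA Hxy. apply Rmult_le_compat_l; auto. apply Rinv_le_contravar.
  apply pow_lt; lra. apply pow_incr; lra. Qed.

Lemma jbr_ge_norm n : Z3norm n <= jbr n.
Proof. unfold jbr. rewrite <- (sqrt_pow2 (Z3norm n)) at 1 by apply Z3norm_nonneg. apply sqrt_le_1_alt. lra. Qed.

Lemma count_shell (N : R) (M K : nat) : 1 <= N -> INR M = 2 * N -> (M <= K)%nat ->
  rsum3 K (fun n => indP (shell N n)) <= INR (2 * M + 1) * (INR (2 * M + 1) * INR (2 * M + 1)).
Proof. intros HN HM HMK. unfold rsum3.
  assert (Hc : forall x y z, shell N (x, y, z) -> (Z.abs x <= Z.of_nat M)%Z /\ (Z.abs y <= Z.of_nat M)%Z /\ (Z.abs z <= Z.of_nat M)%Z).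
  { intros x y z [H1 H2]. pose proof (Z3norm_sq x y z). pose proof (Z3norm_nonneg (x, y, z)).
    assert (Z3norm (x, y, z) ^ 2 < (2 * N) ^ 2) by nra.
    rewrite H in H3. pose proof (pow2_ge_0 (IZR x)). pose proof (pow2_ge_0 (IZR y)). pose proof (pow2_ge_0 (IZR z)).
    split; [|split].
    - apply (coord_le_norm N M 0 (IZR y ^ 2 + IZR z ^ 2)); auto; lra.
    - apply (coord_le_norm N M 0 (IZR x ^ 2 + IZR z ^ 2)); auto; lra.
    - apply (coord_le_norm N M 0 (IZR x ^ 2 + IZR y ^ 2)); auto; lra. }
  apply inner3; auto. apply pos_INR.
  - intros x y. replace (INR (2 * M + 1)) with (INR (2 * M + 1) * 1) by ring.
    apply rsum_box_bound; auto.
    + intros z Hz. rewrite indP_false; auto. intros Hs. destruct (Hc _ _ _ Hs) as [_ [_ H]]. lia.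
    + intros z. pose proof (indP_range (shell N (x, y, z))). lra.
  - intros x y z Hxy. rewrite indP_false; auto. intros Hs. destruct (Hc _ _ _ Hs) as [H1 [H2 _]]. lia.
Qed.

Lemma ln_ge_1 N : 1 <= N -> 1 <= ln (2 + N).
Proof. intros HN. rewrite <- (ln_exp 1). pose proof exp_le_3.
  destruct (Req_dec (exp 1) (2 + N)) as [E|E]; [rewrite E; lra|]. left. apply ln_increasing. apply exp_pos. lra. Qed.

Lemma Bnd_le (N : R) (M : nat) : 1 <= N -> INR M = 2 * N -> Bnd M <= 64 * ln (2 + N).
Proof. intros HN HM. unfold Bnd. pose proof (ln_ge_1 N HN).
  assert (ln (INR (2 * M + 1)) <= 2 * ln (2 + N)).
  { rewrite plus_INR, mult_INR, HM. replace (2 * ln (2 + N)) with (ln ((2 + N) ^ 2)).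
    2: { rewrite ln_pow by lra. simpl INR. ring. }
    replace (INR 2) with 2 by (simpl; ring). replace (INR 1) with 1 by (simpl; ring).
    destruct (Req_dec (2 * (2 * N) + 1) ((2 + N) ^ 2)) as [E|E]; [rewrite E; lra|]. left.
    apply ln_increasing. lra. simpl. nra. }
  lra. Qed.

Lemma rsum3_scal K c g : rsum3 K (fun n => c * g n) = c * rsum3 K g.
Proof. unfold rsum3. rewrite <- rsum_scal. apply rsum_ext; intros. rewrite <- rsum_scal. apply rsum_ext; intros.
  apply rsum_scal. Qed.

Theorem lemma4p14 :
  forall rho0 : R -> R, truncation_profile rho0 ->
  forall C0 : R, 0 < C0 ->
  exists C1 C2 : R, 0 < C1 /\ 0 < C2 /\
  forall (f : R -> R -> Z3 -> C) (a : Z3) (T : R) (J : R -> Prop) (A N : R),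
    1 <= T ->
    is_interval J -> (forall x, J x -> 0 <= x <= T) ->
    1 <= A -> 1 <= N -> is_dyadic N ->
    Z3norm a <= C0 * A -> C1 * A <= N ->
    (forall t t' n, Rabs t <= T -> Rabs t' <= T ->
       Cmod (f t t' n) <= A * / jbr n ^ 3) ->
    (forall t t' n, Rabs t <= T -> Rabs t' <= T ->
       Cmod (Cminus (f t t' n) (f t t' (Z3opp n))) <= A * / jbr n ^ 4) ->
    (forall t t' n, Rabs t <= T -> Rabs t' <= T ->
       exists d : C,
         is_derive (K := R_AbsRing) (V := C_R_NormedModule) (fun s => f t s n) t' d
         /\ Cmod d <= A * / jbr n ^ 4) ->
    forall (K : nat), 2 * N <= INR K ->
    forall lam t : R, Rabs t <= T ->
      Cmod (main_term rho0 N K f a J lam t)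
        <= C2 * (T ^ 2 * A ^ 3 * ln (2 + N) / N).
Proof.
  intros rho0 Hrho C0 HC0.
  exists (4 * C0 + 8), (1000000 * (1 + C0 ^ 2)).
  split; [lra|]. split; [pose proof (pow2_ge_0 C0); lra|].
  intros f a T J A N HT HJi HJ HA HN Hdy Ha HC1 Hf1 Hf2 Hf3 K HK lam t Ht.
  assert (HN8 : 8 <= N) by nra.
  assert (HaN : Z3norm a <= N / 4) by nra.
  destruct Hdy as [k Hk].
  set (M := (2 * 2 ^ k)%nat).
  assert (HM : INR M = 2 * N) by (unfold M; rewrite mult_INR, pow_INR, Hk; replace (INR 2) with 2 by (simpl; ring); ring).
  assert (HMK : (M <= K)%nat) by (apply INR_le; lra).
  set (Lg := ln (2 + N)). assert (HLg : 1 <= Lg) by (apply ln_ge_1; lra).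
  assert (HNpos : 0 < N) by lra.
  assert (HRHS : 0 <= T ^ 2 * A ^ 3 * Lg / N).
  { apply Rdiv_le_0_compat; [|lra]. repeat apply Rmult_le_pos; try apply pow_le; lra. }
  assert (HC2 : 0 < 1000000 * (1 + C0 ^ 2)) by (pose proof (pow2_ge_0 C0); lra).
  destruct (Rlt_dec t 0) as [Htneg|Htpos].
  { unfold main_term. rewrite sum_box_zero. rewrite Cmod_0. apply Rmult_le_pos; lra.
    intros n. rewrite (RInt_ext (V := CV) (integrand f a J lam t n)
      (fun s => Cmult (RtoC (indicator J s * (sin ((t - s) * jbr (Z3add a n)) * cos ((t - s) * jbr n))))
       (Cmult (cexpi (lam * s)) (f t s n)))).
    - rewrite (RInt_neg_t J t T _ _ HJ Htneg). apply injective_projections; simpl; ring.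
    - intros; unfold integrand; f_equal; f_equal; ring. }
  assert (Ht0 : 0 <= t <= T) by (split; [lra|]; pose proof (Rle_abs t); lra).
  destruct (interval_ends J t HJi ltac:(lra)) as [al [be [Hab [Hbt Hends]]]].
  set (chi := chiN rho0 N).
  set (S1 := sum_box K (fun n => Cmult (RtoC (chi n)) (I1 f a lam t al be n))).
  set (S2 := sum_box K (fun n => Cmult (RtoC (chi n)) (I2 f a lam t al be n))).
  set (S3 := sum_box K (fun n => Cmult (RtoC (chi n)) (I3 f a lam t al be n))).
  assert (Hmain : main_term rho0 N K f a J lam t =
     Cplus (Cplus (Cmult (RtoC (1/4)) S1) (Cmult (RtoC (1/4)) S2)) (Cmult (RtoC (1/2)) S3)).
  { unfold main_term, S1, S2, S3. rewrite <- !sum_box_scal, <- !sum_box_plus. apply sum_box_ext. intros n.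
    rewrite (decomp f a J T A lam t al be Ht0 Hab Hbt Hends Hf3 n). fold (chi n).
    apply injective_projections; simpl; ring. }
  rewrite Hmain.
  assert (Hshell : forall n, shell N n -> N / 2 <= jbr n).
  { intros n [H1 _]. pose proof (jbr_ge_norm n). lra. }
  assert (HM3 : forall n, shell N n -> A * / jbr n ^ 3 <= 8 * A / N ^ 3).
  { intros n Hs. eapply Rle_trans. apply (inv_pow_le A (N / 2) (jbr n) 3); [lra| split; [lra| auto]].
    right. field. lra. }
  assert (HM4 : forall n, shell N n -> A * / jbr n ^ 4 <= 16 * A / N ^ 3).
  { intros n Hs. eapply Rle_trans. apply (inv_pow_le A (N / 2) (jbr n) 4); [lra| split; [lra| auto]].
    replace (A * / (N / 2) ^ 4) with ((16 * A / N ^ 3) * / N) by (field; lra).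
    assert (0 <= 16 * A / N ^ 3) by (apply Rdiv_le_0_compat; [lra| apply pow_lt; lra]).
    assert (/ N <= 1) by (rewrite <- Rinv_1; apply Rinv_le_contravar; lra). nra. }
  assert (Hchi1 : forall n, 1 < N -> Rabs (chi n) <= 1) by (intros; apply chi_bound; auto).
  set (W := 2 * PI * T * (24 * A / N ^ 3)).
  assert (HW0 : 0 <= W).
  { unfold W. pose proof PI_RGT_0. assert (0 <= 24 * A / N ^ 3) by (apply Rdiv_le_0_compat; [lra| apply pow_lt; lra]).
    assert (0 <= 2 * PI * T) by (apply Rmult_le_pos; lra). apply Rmult_le_pos; lra. }
  assert (Hhi : forall (I : Z3 -> C) (c mu : Z3 -> R),
     (forall n, I n = RInt (V := CV) (fun s => Cmult (cexpi (c n + mu n * s)) (f t s n)) al be) ->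
     Cmod (sum_box K (fun n => Cmult (RtoC (chi n)) (I n))) <= W * rsum3 K (fun n => indP (shell N n) * mn (mu n))).
  { intros I c mu HI. eapply Rle_trans; [apply Cmod_sum_box|]. rewrite <- (rsum3_scal K W).
    apply rsum3_le. intros n. rewrite Cmod_mult, Cmod_R, HI.
    pose proof (hi_bound f T A t al be HT Ht0 Hab Hbt Hf1 Hf3 n (c n) (mu n)) as Hb.
    eapply Rle_trans. apply (chi_le_ind rho0 N Hrho ltac:(lra) n); apply Cmod_ge_0.
    destruct (excluded_middle_informative (shell N n)) as [Hs|Hs].
    - rewrite indP_true by auto. rewrite !Rmult_1_l.
      eapply Rle_trans; [exact Hb|]. unfold W. pose proof (HM3 n Hs). pose proof (HM4 n Hs).
      pose proof (mn_nonneg (mu n)). pose proof PI_RGT_0.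
      apply Rmult_le_compat_r; auto. apply Rmult_le_compat_l. apply Rmult_le_pos; lra.
      replace (24 * A / N ^ 3) with (8 * A / N ^ 3 + 16 * A / N ^ 3) by (field; lra). lra.
    - rewrite indP_false by auto. lra. }
  assert (Hcount : forall lam', rsum3 K (fun n => indP (shell N n) * mn (lam' - om a n))
      <= 6 * (INR (2 * M + 1) * (INR (2 * M + 1) * Bnd M))).
  { intros lam'. destruct a as [[a1 a2] a3].
    pose proof (Z3norm_sq a1 a2 a3). pose proof (Z3norm_nonneg (a1, a2, a3)).
    assert (Z3norm (a1, a2, a3) ^ 2 <= N ^ 2 / 16) by nra.
    pose proof (pow2_ge_0 (IZR a1)). pose proof (pow2_ge_0 (IZR a2)). pose proof (pow2_ge_0 (IZR a3)).
    apply count_bound; auto; lra. }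
  set (R2 := INR (2 * M + 1)).
  assert (HR2 : 0 <= R2 <= 5 * N) by (unfold R2; rewrite plus_INR, mult_INR, HM; simpl; lra).
  assert (HB : Bnd M <= 64 * Lg) by (apply Bnd_le; auto).
  assert (HB0 : 0 < Bnd M) by apply Bnd_pos.
  assert (HS1 : Cmod S1 <= W * (6 * (R2 * (R2 * Bnd M)))).
  { unfold S1. eapply Rle_trans. apply (Hhi _ (fun n => PI / 2 - t * op a n) (fun n => lam + op a n)).
    { intros; reflexivity. }
    apply Rmult_le_compat_l; auto. eapply Rle_trans; [|apply (Hcount (- lam))].
    right. apply rsum_ext; intros; apply rsum_ext; intros; apply rsum_ext; intros.
    rewrite <- mn_opp. f_equal. f_equal. unfold om, op, uu. ring. }
  assert (HS2 : Cmod S2 <= W * (6 * (R2 * (R2 * Bnd M)))).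
  { unfold S2. eapply Rle_trans. apply (Hhi _ (fun n => t * op a n - PI / 2) (fun n => lam - op a n)).
    { intros; reflexivity. }
    apply Rmult_le_compat_l; [exact HW0| apply (Hcount lam)]. }
  set (V0 := 16 * T * A * (1 + T * C0 ^ 2 * A ^ 2) / N ^ 4).
  assert (HV0 : 0 <= V0).
  { unfold V0. apply Rdiv_le_0_compat; [|apply pow_lt; lra]. pose proof (pow2_ge_0 C0). pose proof (pow2_ge_0 A).
    assert (0 <= T * C0 ^ 2 * A ^ 2) by (apply Rmult_le_pos; [apply Rmult_le_pos|]; lra).
    assert (0 <= 16 * T * A) by (apply Rmult_le_pos; lra). apply Rmult_le_pos; lra. }
  assert (Hlo : forall n, shell N n -> Cmod (Cplus (I3 f a lam t al be n) (I3 f a lam t al be (Z3opp n))) <= V0).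
  { intros n Hs. eapply Rle_trans. apply (lo_pair f a T A lam t al be Ht0 Hab Hbt Hf1 Hf2 Hf3 n).
    pose proof (HM3 n Hs). pose proof (HM4 n Hs). pose proof (Hshell n Hs).
    assert (Hj4 : A * / jbr n ^ 4 <= 16 * A / N ^ 4).
    { eapply Rle_trans. apply (inv_pow_le A (N / 2) (jbr n) 4); [lra| split; [lra| auto]]. right. field. lra. }
    assert (Hj1 : / jbr n <= 2 / N).
    { replace (2 / N) with (/ (N / 2)) by (field; lra). apply Rinv_le_contravar; lra. }
    assert (Ha2 : Z3norm a ^ 2 <= C0 ^ 2 * A ^ 2).
    { pose proof (Z3norm_nonneg a). replace (C0 ^ 2 * A ^ 2) with ((C0 * A) ^ 2) by ring. apply pow_incr. lra. }
    assert (Hjpos : 0 < jbr n) by lra.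
    assert (Hj3 : 0 <= A * / jbr n ^ 3) by (apply Rmult_le_pos; [lra|]; apply Rlt_le, Rinv_0_lt_compat, pow_lt; lra).
    assert (Hq : Z3norm a ^ 2 / jbr n <= C0 ^ 2 * A ^ 2 * (2 / N)).
    { unfold Rdiv. apply Rmult_le_compat; auto. apply pow2_ge_0. left; apply Rinv_0_lt_compat; lra. }
    assert (Hq0 : 0 <= Z3norm a ^ 2 / jbr n) by (apply Rdiv_le_0_compat; [apply pow2_ge_0| lra]).
    assert (HX : T * (Z3norm a ^ 2 / jbr n) * (A * / jbr n ^ 3) <= T * (C0 ^ 2 * A ^ 2 * (2 / N)) * (8 * A / N ^ 3)).
    { apply Rmult_le_compat; auto. apply Rmult_le_pos; lra. apply Rmult_le_compat_l; lra. }
    replace V0 with (T * (16 * A / N ^ 4 + T * (C0 ^ 2 * A ^ 2 * (2 / N)) * (8 * A / N ^ 3))) by (unfold V0; field; lra).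
    apply Rmult_le_compat_l; lra. }
  assert (HS3eq : Cmult (RtoC 2) S3 = sum_box K (fun n => Cmult (RtoC (chi n)) (Cplus (I3 f a lam t al be n) (I3 f a lam t al be (Z3opp n))))).
  { rewrite (sum_box_ext K _ (fun n => Cplus (Cmult (RtoC (chi n)) (I3 f a lam t al be n)) (Cmult (RtoC (chi n)) (I3 f a lam t al be (Z3opp n))))).
    2: { intros n. apply injective_projections; simpl; ring. }
    rewrite sum_box_plus. fold S3.
    assert (E : sum_box K (fun n => Cmult (RtoC (chi n)) (I3 f a lam t al be (Z3opp n))) = S3).
    { unfold S3. rewrite (sum_box_refl K (fun n => Cmult (RtoC (chi n)) (I3 f a lam t al be n))).
      apply sum_box_ext. intros n. unfold chi. rewrite chi_opp; auto. lra. }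
    rewrite E. apply injective_projections; simpl; ring. }
  assert (HS3 : 2 * Cmod S3 <= V0 * (R2 * (R2 * R2))).
  { replace (2 * Cmod S3) with (Cmod (Cmult (RtoC 2) S3)) by (rewrite Cmod_mult, Cmod_R, Rabs_right; lra).
    rewrite HS3eq. eapply Rle_trans; [apply Cmod_sum_box|].
    apply Rle_trans with (rsum3 K (fun n => V0 * indP (shell N n))).
    { apply rsum3_le. intros n. rewrite Cmod_mult, Cmod_R.
      eapply Rle_trans. apply (chi_le_ind rho0 N Hrho ltac:(lra) n); apply Cmod_ge_0.
      destruct (excluded_middle_informative (shell N n)) as [Hs|Hs].
      - rewrite indP_true by auto. rewrite Rmult_1_l, Rmult_1_r. apply Hlo; auto.
      - rewrite indP_false by auto. lra. }
    rewrite rsum3_scal. apply Rmult_le_compat_l; auto. apply count_shell; auto. }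
  assert (Htri : Cmod (Cplus (Cplus (Cmult (RtoC (1/4)) S1) (Cmult (RtoC (1/4)) S2)) (Cmult (RtoC (1/2)) S3))
     <= 1/4 * Cmod S1 + 1/4 * Cmod S2 + 1/2 * Cmod S3).
  { eapply Rle_trans; [apply Cmod_triangle|]. rewrite Cmod_mult, Cmod_R, Rabs_right by lra.
    eapply Rle_trans; [apply Rplus_le_compat_r; apply Cmod_triangle|]. rewrite !Cmod_mult, !Cmod_R, !Rabs_right by lra. lra. }
  eapply Rle_trans; [exact Htri|].
  assert (HW1 : W * (R2 * R2) <= 4800 * (T * A / N)).
  { apply Rle_trans with (W * (25 * N ^ 2)).
    { apply Rmult_le_compat_l; auto. nra. }
    unfold W. replace (2 * PI * T * (24 * A / N ^ 3) * (25 * N ^ 2)) with (1200 * PI * (T * A / N)) by (field; lra).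
    pose proof PI_4. assert (0 <= T * A / N) by (apply Rdiv_le_0_compat; nra). nra. }
  assert (HV1 : V0 * (R2 * (R2 * R2)) <= 2000 * (T * A * (1 + T * C0 ^ 2 * A ^ 2) / N)).
  { apply Rle_trans with (V0 * (125 * N ^ 3)).
    { apply Rmult_le_compat_l; auto. assert (R2 * R2 <= 25 * N ^ 2) by nra.
      assert (0 <= R2 * R2) by nra. nra. }
    unfold V0. right. field. lra. }
  set (TA := T * A / N). set (Q := T ^ 2 * A ^ 3 * Lg / N).
  assert (HTA0 : 0 <= TA) by (unfold TA; apply Rdiv_le_0_compat; nra).
  assert (HTAQ : TA * Lg <= Q).
  { assert (E : Q = TA * Lg * (T * A ^ 2)) by (unfold Q, TA; field; lra). rewrite E.
    assert (1 <= T * A ^ 2) by (pose proof (pow_R1_Rle A 2 ltac:(lra)); nra).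
    assert (0 <= TA * Lg) by (apply Rmult_le_pos; lra). nra. }
  assert (HQ2 : T * A * (T * C0 ^ 2 * A ^ 2) / N <= C0 ^ 2 * Q).
  { unfold Q. replace (T * A * (T * C0 ^ 2 * A ^ 2) / N) with (C0 ^ 2 * (T ^ 2 * A ^ 3 / N)) by (field; lra).
    apply Rmult_le_compat_l; [apply pow2_ge_0|]. 
    replace (T ^ 2 * A ^ 3 * Lg / N) with ((T ^ 2 * A ^ 3 / N) * Lg) by (field; lra).
    assert (0 <= T ^ 2 * A ^ 3 / N) by (apply Rdiv_le_0_compat; [apply Rmult_le_pos; apply pow_le|]; lra). nra. }
  assert (E1 : T * A * (1 + T * C0 ^ 2 * A ^ 2) / N = TA + T * A * (T * C0 ^ 2 * A ^ 2) / N) by (unfold TA; field; lra).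
  rewrite E1 in HV1.
  assert (HS12 : Cmod S1 + Cmod S2 <= 2 * (4800 * TA) * (6 * (64 * Lg))).
  { assert (H6 : W * (6 * (R2 * (R2 * Bnd M))) = (W * (R2 * R2)) * (6 * Bnd M)) by ring.
    rewrite H6 in HS1, HS2. assert (0 <= W * (R2 * R2)) by (apply Rmult_le_pos; nra).
    assert ((W * (R2 * R2)) * (6 * Bnd M) <= (4800 * TA) * (6 * (64 * Lg))) by (apply Rmult_le_compat; lra).
    lra. }
  assert (TA <= TA * Lg) by nra.
  fold Lg. fold Q.
  pose proof (pow2_ge_0 C0).
  assert (0 <= Q) by (unfold Q; exact HRHS).
  nra.
Qed.
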